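(* Let $b\ge0$, let $\nu_1,\nu_2>-1$ with $\nu_1-\nu_2=2\ell$ for some positive integer $\ell$, and let $0<a_1\le a_2$. Then the function $$\mu\mapsto\frac{Q_{\mu,\nu_1}(a_1,b)}{Q_{\mu,\nu_2}(a_2,b)}$$ is unimodal on $(0,\infty)$.
   Context: The Nuttall $Q$-function is $Q_{\mu,\nu}(a,b)=\int_b^\infty x^{\mu}e^{-(x^2+a^2)/2}I_\nu(ax)\,dx$ for $a>0$, $b\ge0$, $\nu>-1$, $\mu>0$, where $I_\nu$ is the modified Bessel function of the first kind. A function is unimodal if it changes its direction of monotonicity at most once (monotone functions included). *)

(* Defs.v *)
From Stdlib Require Import Reals.
From Coquelicot Require Import Coquelicot.
Open Scope R_scope.

Definition Gamma (s : R) : R :=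
  RInt_gen (fun t => Rpower t (s - 1) * exp (- t)) (at_right 0) (Rbar_locally p_infty).

Definition BesselI (nu z : R) : R :=
  Series (fun k : nat =>
    Rpower (z / 2) (2 * INR k + nu) / (INR (Factorial.fact k) * Gamma (INR k + nu + 1))).

(* The lower endpoint is taken as the limit from the right at b, so that the
   (possibly improper, when b = 0) integral is treated uniformly. *)
Definition NuttallQ (mu nu a b : R) : R :=
  RInt_gen (fun x => Rpower x mu * exp (- (x ^ 2 + a ^ 2) / 2) * BesselI nu (a * x))
    (at_right b) (Rbar_locally p_infty).

(* f is unimodal on the set I: it changes its direction of monotonicity at most
   once (monotone functions included: take c outside / at the ends of I). *)
Definition unimodal_on (f : R -> R) (I : R -> Prop) : Prop :=
  exists c : R,
    ((forall x y, I x -> I y -> x <= y -> y <= c -> f x <= f y) /\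
     (forall x y, I x -> I y -> c <= x -> x <= y -> f y <= f x))
    \/
    ((forall x y, I x -> I y -> x <= y -> y <= c -> f y <= f x) /\
     (forall x y, I x -> I y -> c <= x -> x <= y -> f x <= f y)).

(* Main.v *)
Require Import Defs.
From Stdlib Require Import Reals Lra Lia Psatz Classical.
From Coquelicot Require Import Coquelicot.
Open Scope R_scope.

Lemma exp_convex (t a b : R) : 0 <= t <= 1 ->
  exp (t * a + (1 - t) * b) <= t * exp a + (1 - t) * exp b.
Proof.
  intros Ht. set (m := t * a + (1 - t) * b).
  assert (Ea : exp a = exp m * exp (a - m)) by (rewrite <- exp_plus; f_equal; ring).
  assert (Eb : exp b = exp m * exp (b - m)) by (rewrite <- exp_plus; f_equal; ring).
  pose proof (exp_ineq1_le (a - m)). pose proof (exp_ineq1_le (b - m)).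
  pose proof (exp_pos m).
  rewrite Ea, Eb.
  assert (t * (exp m * exp (a - m)) + (1 - t) * (exp m * exp (b - m)) >=
          t * (exp m * (1 + (a - m))) + (1 - t) * (exp m * (1 + (b - m)))).
  { apply Rle_ge. apply Rplus_le_compat; apply Rmult_le_compat_l; try lra;
    apply Rmult_le_compat_l; lra. }
  assert (t * (exp m * (1 + (a - m))) + (1 - t) * (exp m * (1 + (b - m))) = exp m).
  { unfold m; ring. }
  lra.
Qed.

Definition vfun (al be p q s : R) := al * exp (- p * s) + be * exp (q * s) - 1.

Lemma vfun_convex al be p q x y t : 0 <= al -> 0 <= be -> 0 <= t <= 1 ->
  vfun al be p q (t * x + (1 - t) * y) <= t * vfun al be p q x + (1 - t) * vfun al be p q y.
Proof.
  intros Ha Hb Ht. unfold vfun.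
  replace (- p * (t * x + (1 - t) * y)) with (t * (- p * x) + (1 - t) * (- p * y)) by ring.
  replace (q * (t * x + (1 - t) * y)) with (t * (q * x) + (1 - t) * (q * y)) by ring.
  pose proof (exp_convex t (- p * x) (- p * y) Ht).
  pose proof (exp_convex t (q * x) (q * y) Ht).
  assert (al * exp (t * (- p * x) + (1 - t) * (- p * y)) <= al * (t * exp (- p * x) + (1 - t) * exp (- p * y))) by (apply Rmult_le_compat_l; lra).
  assert (be * exp (t * (q * x) + (1 - t) * (q * y)) <= be * (t * exp (q * x) + (1 - t) * exp (q * y))) by (apply Rmult_le_compat_l; lra).
  nra.
Qed.

Lemma vfun_sign al be p q s1 s2 : 0 <= al -> 0 <= be -> s1 < s2 ->
  vfun al be p q s1 = 0 -> vfun al be p q s2 = 0 ->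
  forall s, (s1 <= s <= s2 -> vfun al be p q s <= 0) /\
            ((s <= s1 \/ s2 <= s) -> 0 <= vfun al be p q s).
Proof.
  intros Ha Hb H12 V1 V2 s. split.
  - intros Hs. set (t := (s2 - s) / (s2 - s1)).
    assert (Ht : 0 <= t <= 1).
    { unfold t; split. apply Rdiv_le_0_compat; lra.
      apply Rmult_le_reg_r with (s2 - s1); [lra|]. unfold Rdiv; rewrite Rmult_assoc, Rinv_l; lra. }
    assert (Es : s = t * s1 + (1 - t) * s2).
    { unfold t; field; lra. }
    pose proof (vfun_convex al be p q s1 s2 t Ha Hb Ht). rewrite <- Es in H. nra.
  - intros [Hs|Hs].
    + destruct (Req_dec s s1) as [->|Hne]; [lra|].
      set (t := (s2 - s1) / (s2 - s)).
      assert (Ht : 0 <= t <= 1).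
      { unfold t; split. apply Rdiv_le_0_compat; lra.
        apply Rmult_le_reg_r with (s2 - s); [lra|]. unfold Rdiv; rewrite Rmult_assoc, Rinv_l; lra. }
      assert (Es : s1 = t * s + (1 - t) * s2). { unfold t; field; lra. }
      pose proof (vfun_convex al be p q s s2 t Ha Hb Ht). rewrite <- Es in H.
      assert (t > 0). { unfold t. apply Rdiv_lt_0_compat; lra. }
      nra.
    + destruct (Req_dec s s2) as [->|Hne]; [lra|].
      set (t := (s - s2) / (s - s1)).
      assert (Ht : 0 <= t <= 1).
      { unfold t; split. apply Rdiv_le_0_compat; lra.
        apply Rmult_le_reg_r with (s - s1); [lra|]. unfold Rdiv; rewrite Rmult_assoc, Rinv_l; lra. }
      assert (Es : s2 = t * s1 + (1 - t) * s). { unfold t; field; lra. }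
      pose proof (vfun_convex al be p q s1 s t Ha Hb Ht). rewrite <- Es in H.
      assert (t < 1). { unfold t. apply Rmult_lt_reg_r with (s - s1); [lra|]. unfold Rdiv; rewrite Rmult_assoc, Rinv_l; lra. }
      nra.
Qed.

Lemma three_term p q s1 s2 : 0 < p -> 0 < q -> s1 < s2 ->
  exists al be, 0 < al /\ 0 < be /\
  forall s, (s1 <= s <= s2 -> vfun al be p q s <= 0) /\
            ((s <= s1 \/ s2 <= s) -> 0 <= vfun al be p q s).
Proof.
  intros Hp Hq H12.
  set (A1 := exp (- p * s1)). set (A2 := exp (- p * s2)).
  set (B1 := exp (q * s1)). set (B2 := exp (q * s2)).
  assert (HA : A2 < A1) by (apply exp_increasing; nra).
  assert (HB : B1 < B2) by (apply exp_increasing; nra).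
  assert (0 < A2) by apply exp_pos. assert (0 < B1) by apply exp_pos.
  set (det := A1 * B2 - A2 * B1).
  assert (Hd : 0 < det) by (unfold det; nra).
  exists ((B2 - B1) / det), ((A1 - A2) / det).
  assert (0 < (B2 - B1) / det) by (apply Rdiv_lt_0_compat; lra).
  assert (0 < (A1 - A2) / det) by (apply Rdiv_lt_0_compat; lra).
  split; [lra|]. split; [lra|].
  apply vfun_sign; try lra.
  - unfold vfun. fold A1 B1. unfold det. unfold det in Hd. field; lra.
  - unfold vfun. fold A2 B2. unfold det. unfold det in Hd. field; lra.
Qed.

Lemma exp_le_exp x y : x <= y -> exp x <= exp y.
Proof. intros H. destruct H as [H|H]. left; apply exp_increasing; exact H. rewrite H; lra. Qed.

Lemma RInt_cont_ex (f : R -> R) b x y : (forall z, b < z -> continuous f z) ->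
  b < x -> x <= y -> ex_RInt f x y.
Proof.
  intros Hc Hx Hxy. apply (ex_RInt_continuous (V:=R_CompleteNormedModule)). intros z Hz.
  apply Hc. rewrite Rmin_left in Hz; lra.
Qed.

Lemma RInt_split_ge (f : R -> R) b x x0 y0 y : (forall z, b < z -> continuous f z) ->
  (forall z, b < z -> 0 <= f z) -> b < x -> x <= x0 -> x0 <= y0 -> y0 <= y ->
  RInt f x0 y0 <= RInt f x y.
Proof.
  intros Hc Hp Hx H1 H2 H3.
  assert (E : RInt f x y = RInt f x x0 + (RInt f x0 y0 + RInt f y0 y)).
  { pose proof (RInt_Chasles f x0 y0 y ltac:(apply (RInt_cont_ex f b _ _ Hc); lra) ltac:(apply (RInt_cont_ex f b _ _ Hc); lra)) as C1.
    pose proof (RInt_Chasles f x x0 y ltac:(apply (RInt_cont_ex f b _ _ Hc); lra) ltac:(apply (RInt_cont_ex f b _ _ Hc); lra)) as C2.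
    unfold plus in C1, C2; simpl in C1, C2. lra. }
  rewrite E.
  assert (0 <= RInt f x x0). { apply RInt_ge_0; try lra. apply (RInt_cont_ex f b _ _ Hc); lra. intros; apply Hp; lra. }
  assert (0 <= RInt f y0 y). { apply RInt_ge_0; try lra. apply (RInt_cont_ex f b _ _ Hc); lra. intros; apply Hp; lra. }
  lra.
Qed.

Lemma ex_gen_bounded (f : R -> R) (b M : R) :
  (forall x, b < x -> continuous f x) -> (forall x, b < x -> 0 <= f x) ->
  (forall x y, b < x -> x <= y -> RInt f x y <= M) ->
  exists L, is_RInt_gen f (at_right b) (Rbar_locally p_infty) L /\
    (forall x y, b < x -> x <= y -> RInt f x y <= L).
Proof.
  intros Hc Hp HM.
  set (E := fun v => exists x y, b < x /\ x <= y /\ v = RInt f x y).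
  assert (Hb : bound E). { exists M. intros v (x & y & H1 & H2 & ->). now apply HM. }
  assert (He : exists v, E v). { exists (RInt f (b+1) (b+1)). exists (b+1), (b+1). repeat split; lra. }
  destruct (completeness E Hb He) as [L [HL1 HL2]].
  assert (Hup : forall x y, b < x -> x <= y -> RInt f x y <= L).
  { intros x y Hx Hy. apply HL1. exists x, y. repeat split; lra. }
  exists L. split; [|exact Hup].
  intros P [eps HP].
  assert (Hex : exists x0 y0, b < x0 /\ x0 <= y0 /\ L - eps < RInt f x0 y0).
  { apply NNPP. intros Hn. assert (L <= L - eps); [|destruct eps; simpl in *; lra].
    apply HL2. intros v (x & y & H1 & H2 & ->).
    destruct (Rle_or_lt (RInt f x y) (L - eps)) as [h|h]; [exact h|].
    exfalso; apply Hn; exists x, y; repeat split; lra. }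
  destruct Hex as (x0 & y0 & Hx0 & Hxy0 & Hgt).
  apply Filter_prod with (Q := fun x => b < x < x0) (R := fun y => y0 < y).
  - exists (mkposreal (x0 - b) ltac:(lra)). intros y Hy Hby. split; [exact Hby|].
    unfold ball in Hy; simpl in Hy; unfold AbsRing_ball, abs, minus, plus, opp in Hy; simpl in Hy.
    apply Rabs_lt_between in Hy. lra.
  - exists y0. intros; assumption.
  - intros x y [Hx1 Hx2] Hy. simpl.
    exists (RInt f x y). split.
    + apply (RInt_correct (V:=R_CompleteNormedModule)). apply (RInt_cont_ex f b _ _ Hc); lra.
    + apply HP. unfold ball; simpl; unfold AbsRing_ball, abs, minus, plus, opp; simpl.
      pose proof (RInt_split_ge f b x x0 y0 y Hc Hp Hx1 ltac:(lra) Hxy0 ltac:(lra)).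
      pose proof (Hup x y Hx1 ltac:(lra)).
      apply Rabs_lt_between. lra.
Qed.

Lemma ex_RInt_cont (f : R -> R) a b :
  (forall z, Rmin a b <= z <= Rmax a b -> continuous f z) -> ex_RInt f a b.
Proof. apply (ex_RInt_continuous (V:=R_CompleteNormedModule)). Qed.

Definition Gq (q x : R) := 1 - / (1 + Rpower x q).
Definition dGq (q x : R) := q * Rpower x (q - 1) / (1 + Rpower x q) ^ 2.

Lemma Rpower_pos' x y : 0 < Rpower x y.
Proof. unfold Rpower; apply exp_pos. Qed.

Lemma Gq_derive q x : 0 < x -> is_derive (Gq q) x (dGq q x).
Proof.
  intros Hx. unfold Gq, dGq, Rpower.
  pose proof (exp_pos (q * ln x)).
  auto_derive.
  - repeat split; try lra. 
  - replace ((q - 1) * ln x) with (q * ln x + - ln x) by ring.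
    rewrite exp_plus, exp_Ropp, exp_ln by lra. field. lra.
Qed.

Lemma dGq_cont q x : 0 < x -> continuous (dGq q) x.
Proof.
  intros Hx. apply (ex_derive_continuous (K:=R_AbsRing) (V:=R_NormedModule)). unfold dGq, Rpower.
  pose proof (exp_pos (q * ln x)).
  auto_derive. repeat split; try lra. nra.
Qed.

Lemma Gq_bounds q x : 0 <= Gq q x < 1.
Proof.
  unfold Gq. pose proof (Rpower_pos' x q).
  assert (0 < / (1 + Rpower x q)) by (apply Rinv_0_lt_compat; lra).
  assert (/ (1 + Rpower x q) <= 1).
  { rewrite <- Rinv_1. apply Rinv_le_contravar; lra. }
  lra.
Qed.

Lemma dom_RInt_bound (f : R -> R) b q M : 0 <= b -> 0 < q -> 0 <= M ->
  (forall x, b < x -> continuous f x) ->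
  (forall x, b < x -> f x <= M * dGq q x) ->
  forall x y, b < x -> x <= y -> RInt f x y <= M.
Proof.
  intros Hb Hq HM Hc Hf x y Hx Hxy.
  assert (Hg : is_RInt (fun t => M * dGq q t) x y (M * (Gq q y - Gq q x))).
  { apply (is_RInt_scal (V:=R_NormedModule) (dGq q) x y M (Gq q y - Gq q x)).
    apply (is_RInt_derive (V:=R_CompleteNormedModule) (Gq q) (dGq q)).
    - intros z Hz. rewrite Rmin_left in Hz by lra. apply Gq_derive. lra.
    - intros z Hz. rewrite Rmin_left in Hz by lra. apply dGq_cont. lra. }
  apply Rle_trans with (M * (Gq q y - Gq q x)).
  - rewrite <- (is_RInt_unique _ _ _ _ Hg).
    apply RInt_le; [lra| |eexists; exact Hg|].
    + apply ex_RInt_cont. intros z Hz. apply Hc. rewrite Rmin_left in Hz; lra.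
    + intros z Hz. apply Hf. lra.
  - pose proof (Gq_bounds q x). pose proof (Gq_bounds q y).
    nra.
Qed.

Lemma ln_le_sub1 y : 0 < y -> ln y <= y - 1.
Proof. intros Hy. pose proof (exp_ineq1_le (ln y)). rewrite exp_ln in H; lra. Qed.

Lemma Rpower_le_exp t s c : 0 < t -> 0 < s -> 0 < c ->
  Rpower t s <= exp (s * ln (s / c)) * exp (c * t).
Proof.
  intros Ht Hs Hc. unfold Rpower. rewrite <- exp_plus. apply exp_le_exp.
  assert (ln t = ln (s / c) + ln (t * c / s)).
  { rewrite <- ln_mult. f_equal. field. lra. apply Rdiv_lt_0_compat; lra.
    apply Rdiv_lt_0_compat; nra. }
  pose proof (ln_le_sub1 (t * c / s) ltac:(apply Rdiv_lt_0_compat; nra)).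
  assert (s * (t * c / s) = c * t) by (field; lra).
  nra.
Qed.

Lemma gen_unique (f : R -> R) b L :
  is_RInt_gen f (at_right b) (Rbar_locally p_infty) L ->
  RInt_gen f (at_right b) (Rbar_locally p_infty) = L.
Proof.
  intros H. apply (is_RInt_gen_unique (V:=R_CompleteNormedModule)). exact H.
Qed.

Lemma fp_intro (P : R * R -> Prop) b :
  (forall x y, b < x -> x < b + 1 -> b + 1 < y -> P (x, y)) ->
  filter_prod (at_right b) (Rbar_locally p_infty) P.
Proof.
  intros H. apply Filter_prod with (Q := fun x => b < x < b + 1) (R := fun y => b + 1 < y).
  - exists (mkposreal 1 ltac:(lra)). intros y Hy Hby. split; [exact Hby|].
    unfold ball in Hy; simpl in Hy; unfold AbsRing_ball, abs, minus, plus, opp in Hy; simpl in Hy.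
    apply Rabs_lt_between in Hy. lra.
  - exists (b + 1). intros; assumption.
  - intros x y [] Hy. apply H; lra.
Qed.

Lemma Rpower_cont p x : 0 < x -> continuous (fun t => Rpower t p) x.
Proof.
  intros Hx. apply (ex_derive_continuous (K:=R_AbsRing) (V:=R_NormedModule)).
  unfold Rpower. auto_derive. lra.
Qed.

Definition gam (s t : R) := Rpower t (s - 1) * exp (- t).

Lemma gam_cont s x : 0 < x -> continuous (gam s) x.
Proof.
  intros Hx. apply (ex_derive_continuous (K:=R_AbsRing) (V:=R_NormedModule)).
  unfold gam, Rpower. auto_derive. lra.
Qed.

Lemma gam_is (s : R) : 0 < s ->
  exists L, is_RInt_gen (gam s) (at_right 0) (Rbar_locally p_infty) L /\ 0 < L.
Proof.
  intros Hs.
  set (A := exp (s * ln (s / (1/4)))).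
  assert (HA : 0 < A) by apply exp_pos.
  set (M := (1 + A) ^ 2 / s).
  assert (HM : 0 <= M) by (unfold M; apply Rdiv_le_0_compat; nra).
  assert (Hc : forall x, 0 < x -> continuous (gam s) x) by (intros; apply gam_cont; lra).
  assert (Hp : forall x, 0 < x -> 0 <= gam s x).
  { intros. unfold gam. pose proof (Rpower_pos' x (s-1)). pose proof (exp_pos (-x)). nra. }
  assert (Hf : forall x, 0 < x -> gam s x <= M * dGq s x).
  { intros x Hx. unfold gam, dGq, M.
    pose proof (Rpower_le_exp x s (1/4) Hx Hs ltac:(lra)). fold A in H.
    pose proof (Rpower_pos' x s). pose proof (Rpower_pos' x (s - 1)).
    assert (E1 : 1 <= exp (1/4 * x)).
    { apply Rle_trans with (exp 0); [rewrite exp_0; lra| apply exp_le_exp; lra]. }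
    assert (H2 : 1 + Rpower x s <= (1 + A) * exp (1/4 * x)) by nra.
    assert (H3 : (1 + Rpower x s) ^ 2 * exp (- x) <= (1 + A) ^ 2).
    { apply Rle_trans with (((1 + A) * exp (1/4 * x)) ^ 2 * exp (- x)).
      - apply Rmult_le_compat_r. left; apply exp_pos. apply pow_incr. nra.
      - replace (((1 + A) * exp (1 / 4 * x)) ^ 2 * exp (- x)) with
          ((1 + A) ^ 2 * (exp (1 / 4 * x) * exp (1 / 4 * x) * exp (- x))) by ring.
        rewrite <- !exp_plus.
        assert (exp (1 / 4 * x + 1 / 4 * x + - x) <= 1).
        { apply Rle_trans with (exp 0); [apply exp_le_exp; lra|rewrite exp_0; lra]. }
        assert (0 <= (1 + A) ^ 2) by nra. nra. }
    assert (0 < (1 + Rpower x s) ^ 2) by nra.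
    apply Rmult_le_reg_r with ((1 + Rpower x s) ^ 2); [lra|].
    replace ((1 + A) ^ 2 / s * (s * Rpower x (s - 1) / (1 + Rpower x s) ^ 2) * (1 + Rpower x s) ^ 2)
      with ((1 + A) ^ 2 * Rpower x (s - 1)) by (field; lra).
    nra. }
  destruct (ex_gen_bounded (gam s) 0 M Hc Hp (dom_RInt_bound (gam s) 0 s M ltac:(lra) Hs HM Hc Hf))
    as [L [HL1 HL2]].
  exists L. split; [exact HL1|].
  apply Rlt_le_trans with (RInt (gam s) 1 2); [|apply HL2; lra].
  assert (H0 := RInt_lt (fun _ => 0) (gam s) 1 2 ltac:(lra)
     ltac:(intros; apply gam_cont; lra) ltac:(intros; apply continuous_const)
     ltac:(intros x Hx; unfold gam; pose proof (Rpower_pos' x (s-1)); pose proof (exp_pos (-x)); nra)).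
  rewrite RInt_const in H0. unfold scal in H0; simpl in H0; unfold mult in H0; simpl in H0. lra.
Qed.

Lemma Gamma_is s : 0 < s -> is_RInt_gen (gam s) (at_right 0) (Rbar_locally p_infty) (Gamma s)
  /\ 0 < Gamma s.
Proof.
  intros Hs. destruct (gam_is s Hs) as [L [H1 H2]].
  assert (E : Gamma s = L) by (apply (gen_unique (gam s) 0 L H1)).
  rewrite E; auto.
Qed.

Lemma ball_R (x e y : R) : ball x e y <-> Rabs (y - x) < e.
Proof. unfold ball; simpl; unfold AbsRing_ball, abs, minus, plus, opp; simpl. tauto. Qed.

Definition Fg (s t : R) := - (Rpower t s * exp (- t)).

Lemma Fg_derive s t : 0 < t -> is_derive (Fg s) t (gam (s + 1) t - s * gam s t).
Proof.
  intros Ht. unfold Fg, gam, Rpower. auto_derive. lra.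
  replace (s + 1 - 1) with s by ring.
  replace ((s - 1) * ln t) with (s * ln t + - ln t) by ring.
  rewrite exp_plus, (exp_Ropp (ln t)), exp_ln by lra. field. lra.
Qed.

Lemma Fg_lim0 s : 0 < s -> filterlim (Fg s) (at_right 0) (locally 0).
Proof.
  intros Hs. apply (filterlim_locally (F:=at_right 0)). intros eps.
  assert (Hd : 0 < exp (ln eps / s)) by apply exp_pos.
  exists (mkposreal _ Hd). intros t Ht Htp. simpl in Ht. change (Rabs (t - 0) < exp (ln eps / s)) in Ht. apply ball_R.
  rewrite Rminus_0_r in Ht |- *. rewrite Rabs_right in Ht by lra.
  unfold Fg. rewrite Rabs_Ropp. rewrite Rabs_right.
  2: { pose proof (Rpower_pos' t s). pose proof (exp_pos (-t)). nra. }
  assert (Rpower t s < eps).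
  { unfold Rpower. rewrite <- (exp_ln eps) by (destruct eps; simpl; lra).
    apply exp_increasing.
    assert (ln t < ln eps / s).
    { rewrite <- (ln_exp (ln eps / s)). apply ln_increasing; lra. }
    apply Rmult_lt_reg_r with (/ s). apply Rinv_0_lt_compat; lra.
    replace (s * ln t * / s) with (ln t) by (field; lra). exact H. }
  assert (exp (- t) <= 1). { apply Rle_trans with (exp 0); [apply exp_le_exp; lra|rewrite exp_0; lra]. }
  pose proof (Rpower_pos' t s). nra.
Qed.

Lemma Fg_liminf s : 0 < s -> filterlim (Fg s) (Rbar_locally p_infty) (locally 0).
Proof.
  intros Hs. apply (filterlim_locally (F:=Rbar_locally p_infty)). intros eps.
  set (A := exp (s * ln (s / (1/2)))).
  assert (HA : 0 < A) by apply exp_pos.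
  exists (Rmax 1 (2 * (ln A - ln eps))). intros t Ht. apply ball_R.
  assert (Ht1 : 1 < t) by (eapply Rle_lt_trans; [apply Rmax_l|exact Ht]).
  assert (Ht2 : 2 * (ln A - ln eps) < t) by (eapply Rle_lt_trans; [apply Rmax_r|exact Ht]).
  rewrite Rminus_0_r. unfold Fg. rewrite Rabs_Ropp. rewrite Rabs_right.
  2: { pose proof (Rpower_pos' t s). pose proof (exp_pos (-t)). nra. }
  pose proof (Rpower_le_exp t s (1/2) ltac:(lra) Hs ltac:(lra)). fold A in H.
  apply Rle_lt_trans with (A * exp (1/2 * t) * exp (- t)).
  { apply Rmult_le_compat_r; [left; apply exp_pos| exact H]. }
  rewrite Rmult_assoc, <- exp_plus.
  assert (exp (1 / 2 * t + - t) < exp (ln eps - ln A)) by (apply exp_increasing; lra).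
  assert (E : exp (ln eps - ln A) = eps / A).
  { unfold Rminus. rewrite exp_plus, exp_Ropp, !exp_ln; try (destruct eps; simpl; lra). }
  rewrite E in H0.
  apply Rmult_lt_reg_l with (/ A). apply Rinv_0_lt_compat; lra.
  rewrite <- Rmult_assoc, Rinv_l by lra. lra.
Qed.

Lemma Gamma_rec s : 0 < s -> Gamma (s + 1) = s * Gamma s.
Proof.
  intros Hs. destruct (Gamma_is s Hs) as [HG _].
  assert (HD : is_RInt_gen (Derive (Fg s)) (at_right 0) (Rbar_locally p_infty) (0 - 0)).
  { apply is_RInt_gen_Derive.
    - apply fp_intro. intros x y Hx Hx1 Hy z Hz. eexists. apply Fg_derive.
      simpl in Hz; rewrite Rmin_left in Hz; lra.
    - apply fp_intro. intros x y Hx Hx1 Hy z Hz. simpl in Hz; rewrite Rmin_left in Hz by lra.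
      apply continuous_ext_loc with (fun t => gam (s + 1) t - s * gam s t).
      + apply locally_interval with 0 p_infty. simpl; lra. simpl; auto.
        intros u Hu _. simpl in Hu. symmetry. apply is_derive_unique. apply Fg_derive; lra.
      + apply (ex_derive_continuous (K:=R_AbsRing) (V:=R_NormedModule)).
        unfold gam, Rpower. auto_derive. lra.
    - apply Fg_lim0; lra.
    - apply Fg_liminf; lra. }
  pose proof (is_RInt_gen_plus _ _ _ _ HD (is_RInt_gen_scal _ s _ HG)) as HS.
  assert (HS' : is_RInt_gen (gam (s + 1)) (at_right 0) (Rbar_locally p_infty) (s * Gamma s)).
  { replace (s * Gamma s) with (plus (0 - 0) (scal s (Gamma s))).
    2: { unfold plus, scal; simpl; unfold mult; simpl. ring. }
    eapply is_RInt_gen_ext; [|exact HS].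
    apply fp_intro. intros x y Hx Hx1 Hy z Hz. simpl in Hz; rewrite Rmin_left in Hz by lra.
    unfold plus, scal; simpl; unfold mult; simpl.
    rewrite (is_derive_unique _ _ _ (Fg_derive s z ltac:(lra))). ring. }
  apply (gen_unique _ 0 _ HS').
Qed.

Definition cB (nu : R) (k : nat) := / (INR (Factorial.fact k) * Gamma (INR k + nu + 1)).

Lemma INR_fact_pos k : 0 < INR (Factorial.fact k).
Proof. apply lt_0_INR. apply Factorial.lt_O_fact. Qed.

Lemma cB_pos nu k : -1 < nu -> 0 < cB nu k.
Proof.
  intros Hnu. unfold cB. apply Rinv_0_lt_compat. apply Rmult_lt_0_compat.
  apply INR_fact_pos. apply Gamma_is. pose proof (pos_INR k). lra.
Qed.

Lemma cB_rec nu k : -1 < nu ->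
  cB nu (S k) = cB nu k / ((INR k + 1) * (INR k + nu + 1)).
Proof.
  intros Hnu. unfold cB. rewrite fact_simpl, mult_INR, S_INR.
  replace (INR k + 1 + nu + 1) with ((INR k + nu + 1) + 1) by ring.
  pose proof (pos_INR k). pose proof (INR_fact_pos k).
  rewrite Gamma_rec by lra.
  pose proof (proj2 (Gamma_is (INR k + nu + 1) ltac:(lra))).
  rewrite <- S_INR. rewrite S_INR. field. repeat split; lra.
Qed.

Lemma lim_inv_S : is_lim_seq (fun n => / (INR n + 1)) 0.
Proof.
  assert (H : is_lim_seq (fun n => INR (S n)) p_infty).
  { apply (is_lim_seq_incr_1 INR p_infty). apply is_lim_seq_INR. }
  apply is_lim_seq_inv in H; [|discriminate].
  simpl in H. eapply is_lim_seq_ext; [|exact H]. intros n. change (/ INR (S n) = / (INR n + 1)). rewrite S_INR. reflexivity.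
Qed.

Lemma cB_radius nu : -1 < nu -> CV_radius (cB nu) = p_infty.
Proof.
  intros Hnu. apply CV_radius_infinite_DAlembert.
  - intros n. pose proof (cB_pos nu n Hnu). lra.
  - apply is_lim_seq_le_le with (fun _ => 0) (fun n => / (nu + 1) * / (INR n + 1)).
    + intros n. rewrite cB_rec by lra. pose proof (cB_pos nu n Hnu). pose proof (pos_INR n).
      split. apply Rabs_pos.
      rewrite Rabs_right.
      2: { apply Rle_ge. apply Rmult_le_pos. apply Rdiv_le_0_compat; nra. left; apply Rinv_0_lt_compat; lra. }
      unfold Rdiv. rewrite Rmult_comm, <- Rmult_assoc, Rinv_l by lra. rewrite Rmult_1_l.
      rewrite <- Rinv_mult. apply Rinv_le_contravar. nra. nra.
    + apply is_lim_seq_const.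
    + replace (Finite 0) with (Rbar_mult (/ (nu + 1)) 0) by (simpl; f_equal; ring).
      apply is_lim_seq_scal_l. apply lim_inv_S.
Qed.

Lemma BesselI_ps nu z : -1 < nu -> 0 < z ->
  BesselI nu z = Rpower (z / 2) nu * PSeries (cB nu) ((z / 2) ^ 2).
Proof.
  intros Hnu Hz. unfold BesselI, PSeries. rewrite <- Series_scal_l. apply Series_ext. intros k.
  rewrite Rpower_plus.
  replace (2 * INR k) with (INR (2 * k)) by (rewrite mult_INR; reflexivity).
  rewrite Rpower_pow by lra. rewrite pow_mult. unfold cB.
  pose proof (INR_fact_pos k). pose proof (pos_INR k).
  pose proof (proj2 (Gamma_is (INR k + nu + 1) ltac:(lra))).
  field. lra.
Qed.

Lemma BesselI_cont nu z : -1 < nu -> 0 < z -> continuous (BesselI nu) z.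
Proof.
  intros Hnu Hz.
  apply continuous_ext_loc with (fun z => Rpower (z / 2) nu * PSeries (cB nu) ((z / 2) ^ 2)).
  - apply locally_interval with 0 p_infty. simpl; lra. simpl; auto.
    intros u Hu _. simpl in Hu. symmetry. apply BesselI_ps; lra.
  - apply (continuous_mult (K:=R_AbsRing) (fun z => Rpower (z / 2) nu) (fun z => PSeries (cB nu) ((z / 2) ^ 2))).
    + apply (ex_derive_continuous (K:=R_AbsRing) (V:=R_NormedModule)).
      unfold Rpower. auto_derive. lra.
    + apply (continuous_comp (fun z => (z / 2) ^ 2) (PSeries (cB nu))).
      * apply (ex_derive_continuous (K:=R_AbsRing) (V:=R_NormedModule)). auto_derive. auto.
      * apply continuity_pt_filterlim. apply PSeries_continuity. rewrite cB_radius by lra. simpl; auto.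
Qed.

Definition smin (nu : R) := Rmin 1 (1 + nu).

Lemma smin_pos nu : -1 < nu -> 0 < smin nu /\ smin nu <= 1 /\ smin nu <= 1 + nu.
Proof. intros. unfold smin. split; [apply Rmin_glb_lt; lra|split; [apply Rmin_l|apply Rmin_r]]. Qed.

Lemma cB_bound nu k : -1 < nu ->
  cB nu k * (smin nu ^ (2 * k) * INR (Factorial.fact k) ^ 2) <= cB nu 0.
Proof.
  intros Hnu. destruct (smin_pos nu Hnu) as (Hs1 & Hs2 & Hs3). set (s := smin nu) in *.
  induction k as [|k IH].
  - simpl. lra.
  - rewrite cB_rec by lra. rewrite fact_simpl, mult_INR, S_INR.
    replace (s ^ (2 * S k)) with (s * (s * s ^ (2 * k))).
    2: { replace (2 * S k)%nat with (S (S (2 * k))) by lia. reflexivity. }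
    pose proof (cB_pos nu k Hnu). pose proof (pos_INR k). pose proof (INR_fact_pos k).
    set (F := INR (Factorial.fact k)) in *.
    assert (Hk : s * (INR k + 1) <= INR k + nu + 1).
    { destruct (Rle_or_lt 0 nu). nra. unfold s, smin. rewrite Rmin_right by lra. nra. }
    assert (E : cB nu k / ((INR k + 1) * (INR k + nu + 1)) *
      (s * (s * s ^ (2 * k)) * ((INR k + 1) * F) ^ 2) =
      (cB nu k * (s ^ (2 * k) * F ^ 2)) * (s * s * (INR k + 1) / (INR k + nu + 1))).
    { field. lra. }
    rewrite E.
    assert (0 <= s ^ (2 * k)) by (apply pow_le; lra).
    assert (s * s * (INR k + 1) / (INR k + nu + 1) <= 1).
    { apply Rmult_le_reg_r with (INR k + nu + 1); [lra|].
      unfold Rdiv. rewrite Rmult_assoc, Rinv_l by lra. nra. }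
    assert (0 <= cB nu k * (s ^ (2 * k) * F ^ 2)) by (apply Rmult_le_pos; [lra|]; apply Rmult_le_pos; [lra|nra]).
    assert (0 <= s * s * (INR k + 1) / (INR k + nu + 1)) by (apply Rdiv_le_0_compat; nra).
    nra.
Qed.

Lemma sum_sq_le (t : nat -> R) N : (forall k, 0 <= t k) ->
  sum_f_R0 (fun k => t k ^ 2) N <= (sum_f_R0 t N) ^ 2.
Proof.
  intros Ht. induction N as [|N IH].
  - simpl. lra.
  - change (sum_f_R0 (fun k => t k ^ 2) N + t (S N) ^ 2 <= (sum_f_R0 t N + t (S N)) ^ 2).
    assert (0 <= sum_f_R0 t N). { apply cond_pos_sum. exact Ht. }
    pose proof (Ht (S N)). nra.
Qed.

Lemma exp_partial Y N : 0 <= Y -> sum_f_R0 (fun k => Y ^ k / INR (Factorial.fact k)) N <= exp Y.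
Proof.
  intros HY. pose proof (is_exp_Reals Y) as H. unfold is_pseries in H.
  change (is_lim_seq (sum_n (fun k => scal (pow_n Y k) (/ INR (Factorial.fact k)))) (exp Y)) in H.
  pose proof (is_lim_seq_incr_compare _ _ H) as H2.
  assert (E : forall n, sum_n (fun k => scal (pow_n Y k) (/ INR (Factorial.fact k))) n =
     sum_f_R0 (fun k => Y ^ k / INR (Factorial.fact k)) n).
  { intros n. rewrite sum_n_Reals. apply sum_eq. intros i _. unfold scal; simpl; unfold mult; simpl.
    rewrite pow_n_pow. reflexivity. }
  rewrite <- E. apply H2. intros n. rewrite !E.
  change (sum_f_R0 (fun k => Y ^ k / INR (Factorial.fact k)) n <= sum_f_R0 (fun k => Y ^ k / INR (Factorial.fact k)) n + Y ^ S n / INR (Factorial.fact (S n))).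
  pose proof (INR_fact_pos (S n)). pose proof (pow_le Y (S n) HY).
  assert (0 <= Y ^ S n / INR (Factorial.fact (S n))) by (apply Rdiv_le_0_compat; lra). lra.
Qed.

Lemma series_le_bound (a : nat -> R) B : ex_series a ->
  (forall N, sum_f_R0 a N <= B) -> Series a <= B.
Proof.
  intros Hex HB. pose proof (Series_correct a Hex) as H.
  change (is_lim_seq (sum_n a) (Series a)) in H.
  assert (Hle := is_lim_seq_le (sum_n a) (fun _ => B) (Series a) B
    ltac:(intros n; rewrite sum_n_Reals; apply HB) H (is_lim_seq_const B)).
  exact Hle.
Qed.

Lemma BesselI_bound nu z : -1 < nu -> 0 < z ->
  BesselI nu z <= Rpower (z / 2) nu * (cB nu 0 * exp (z / smin nu)).
Proof.
  intros Hnu Hz. rewrite BesselI_ps by lra.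
  apply Rmult_le_compat_l. left; apply Rpower_pos'.
  destruct (smin_pos nu Hnu) as (Hs1 & Hs2 & Hs3). set (s := smin nu) in *.
  set (Y := z / 2 / s).
  assert (HY : 0 <= Y) by (unfold Y; apply Rdiv_le_0_compat; lra).
  replace (exp (z / s)) with (exp Y ^ 2).
  2: { simpl. rewrite Rmult_1_r, <- exp_plus. f_equal. unfold Y. field. lra. }
  apply series_le_bound.
  - apply ex_pseries_R. apply CV_radius_inside. rewrite cB_radius by lra. simpl; auto.
  - intros N.
    apply Rle_trans with (cB nu 0 * sum_f_R0 (fun k => (Y ^ k / INR (Factorial.fact k)) ^ 2) N).
    + rewrite scal_sum. apply sum_Rle. intros k _.
      pose proof (cB_bound nu k Hnu). fold s in H.
      pose proof (INR_fact_pos k). pose proof (cB_pos nu k Hnu).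
      assert (Hsk : 0 < s ^ (2 * k)) by (apply pow_lt; lra).
      assert (E : (Y ^ k / INR (Factorial.fact k)) ^ 2 * cB nu 0 =
        cB nu 0 * ((z / 2) ^ 2) ^ k / (s ^ (2 * k) * INR (Factorial.fact k) ^ 2)).
      { assert (E1 : ((z / 2) ^ 2) ^ k = ((z / 2) ^ k) ^ 2) by (rewrite <- !pow_mult; f_equal; lia).
        assert (E2 : s ^ (2 * k) = (s ^ k) ^ 2) by (rewrite <- !pow_mult; f_equal; lia).
        assert (E3 : Y ^ k = (z / 2) ^ k / s ^ k) by (unfold Y, Rdiv; rewrite Rpow_mult_distr, pow_inv; reflexivity).
        rewrite E1, E2, E3. assert (0 < s ^ k) by (apply pow_lt; lra). field. lra. }
      rewrite E.
      set (D := s ^ (2 * k) * INR (Factorial.fact k) ^ 2) in *.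
      assert (HD : 0 < D) by (unfold D; apply Rmult_lt_0_compat; [lra| apply pow_lt; lra]).
      assert (HW : 0 <= ((z / 2) ^ 2) ^ k) by (apply pow_le; nra).
      apply Rle_trans with (cB nu k * D * ((z / 2) ^ 2) ^ k / D).
      { right. field. lra. }
      unfold Rdiv. apply Rmult_le_compat_r. left; apply Rinv_0_lt_compat; lra.
      apply Rmult_le_compat_r; assumption.
    + apply Rmult_le_compat_l. left; apply cB_pos; lra.
      apply Rle_trans with ((sum_f_R0 (fun k => Y ^ k / INR (Factorial.fact k)) N) ^ 2).
      * apply sum_sq_le. intros k. apply Rdiv_le_0_compat. apply pow_le; lra. apply INR_fact_pos.
      * assert (0 <= sum_f_R0 (fun k => Y ^ k / INR (Factorial.fact k)) N).
        { apply cond_pos_sum. intros k. apply Rdiv_le_0_compat. apply pow_le; lra. apply INR_fact_pos. }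
        pose proof (exp_partial Y N HY). nra.
Qed.

Lemma series_ge_partial (a : nat -> R) N : ex_series a -> (forall k, 0 <= a k) ->
  sum_f_R0 a N <= Series a.
Proof.
  intros Hex Hp. pose proof (Series_correct a Hex) as H.
  change (is_lim_seq (sum_n a) (Series a)) in H.
  rewrite <- sum_n_Reals. apply (is_lim_seq_incr_compare _ _ H).
  intros n. rewrite !sum_n_Reals. change (sum_f_R0 a n <= sum_f_R0 a n + a (S n)).
  pose proof (Hp (S n)); lra.
Qed.

Lemma BesselI_pos nu z : -1 < nu -> 0 < z -> 0 < BesselI nu z.
Proof.
  intros Hnu Hz. rewrite BesselI_ps by lra. apply Rmult_lt_0_compat. apply Rpower_pos'.
  unfold PSeries. eapply Rlt_le_trans; [|apply (series_ge_partial _ 0)].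
  - simpl. rewrite Rmult_1_r. apply cB_pos; lra.
  - apply ex_pseries_R. apply CV_radius_inside. rewrite cB_radius by lra. simpl; auto.
  - intros k. apply Rmult_le_pos. left; apply cB_pos; lra. apply pow_le. nra.
Qed.

Definition nq (mu nu a x : R) := Rpower x mu * exp (- (x ^ 2 + a ^ 2) / 2) * BesselI nu (a * x).

Lemma nq_cont mu nu a x : -1 < nu -> 0 < a -> 0 < x -> continuous (nq mu nu a) x.
Proof.
  intros Hnu Ha Hx. unfold nq.
  apply (continuous_mult (K:=R_AbsRing) (fun x => Rpower x mu * exp (- (x ^ 2 + a ^ 2) / 2)) (fun x => BesselI nu (a * x))).
  - apply (ex_derive_continuous (K:=R_AbsRing) (V:=R_NormedModule)).
    unfold Rpower. auto_derive. lra.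
  - apply (continuous_comp (fun x => a * x) (BesselI nu)).
    + apply (ex_derive_continuous (K:=R_AbsRing) (V:=R_NormedModule)). auto_derive. auto.
    + apply BesselI_cont; nra.
Qed.

Lemma nq_pos mu nu a x : -1 < nu -> 0 < a -> 0 < x -> 0 < nq mu nu a x.
Proof.
  intros. unfold nq. apply Rmult_lt_0_compat. apply Rmult_lt_0_compat. apply Rpower_pos'. apply exp_pos.
  apply BesselI_pos; nra.
Qed.

Lemma nq_dom mu nu a : 0 < mu -> -1 < nu -> 0 < a ->
  exists M, 0 <= M /\ forall x, 0 < x -> nq mu nu a x <= M * dGq (mu + nu + 1) x.
Proof.
  intros Hmu Hnu Ha. set (q := mu + nu + 1). assert (Hq : 0 < q) by (unfold q; lra).
  destruct (smin_pos nu Hnu) as (Hs1 & Hs2 & Hs3). set (s := smin nu) in *.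
  set (C := exp (- (a ^ 2) / 2) * Rpower (a / 2) nu * cB nu 0).
  assert (HC : 0 < C).
  { unfold C. apply Rmult_lt_0_compat. apply Rmult_lt_0_compat. apply exp_pos. apply Rpower_pos'. apply cB_pos; lra. }
  set (A := exp (q * ln (q / 1))).
  assert (HA : 0 < A) by apply exp_pos.
  set (L := a / s + 2).
  exists (C * (1 + A) ^ 2 * exp (L ^ 2 / 2) / q).
  split.
  { apply Rdiv_le_0_compat; [|lra]. apply Rmult_le_pos. nra. left; apply exp_pos. }
  intros x Hx. unfold nq, dGq.
  pose proof (BesselI_bound nu (a * x) Hnu ltac:(nra)) as HB. fold s in HB.
  assert (E1 : Rpower (a * x / 2) nu = Rpower (a / 2) nu * Rpower x nu).
  { rewrite Rpower_mult_distr by lra. f_equal. field. }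
  rewrite E1 in HB.
  assert (E2 : exp (- (x ^ 2 + a ^ 2) / 2) = exp (- (x ^ 2) / 2) * exp (- (a ^ 2) / 2)).
  { rewrite <- exp_plus. f_equal. field. }
  pose proof (Rpower_pos' x mu) as Pmu.
  pose proof (exp_pos (- (x ^ 2 + a ^ 2) / 2)) as Pe.
  apply Rle_trans with (Rpower x mu * exp (- (x ^ 2 + a ^ 2) / 2) *
     (Rpower (a / 2) nu * Rpower x nu * (cB nu 0 * exp (a * x / s)))).
  { apply Rmult_le_compat_l; [nra|exact HB]. }
  assert (E3 : Rpower x mu * exp (- (x ^ 2 + a ^ 2) / 2) *
     (Rpower (a / 2) nu * Rpower x nu * (cB nu 0 * exp (a * x / s))) =
     C * Rpower x (q - 1) * exp (- (x ^ 2) / 2 + a * x / s)).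
  { rewrite E2. unfold C. rewrite exp_plus.
    replace (q - 1) with (mu + nu) by (unfold q; ring). rewrite Rpower_plus. ring. }
  rewrite E3.
  pose proof (Rpower_le_exp x q 1 Hx Hq ltac:(lra)) as HP. fold A in HP.
  pose proof (Rpower_pos' x q) as Pq. pose proof (Rpower_pos' x (q - 1)) as Pq1.
  assert (Ex1 : 1 <= exp (1 * x)).
  { apply Rle_trans with (exp 0); [rewrite exp_0; lra| apply exp_le_exp; lra]. }
  assert (H2 : 1 + Rpower x q <= (1 + A) * exp (1 * x)) by nra.
  assert (H3 : (1 + Rpower x q) ^ 2 * exp (- (x ^ 2) / 2 + a * x / s) <= (1 + A) ^ 2 * exp (L ^ 2 / 2)).
  { apply Rle_trans with (((1 + A) * exp (1 * x)) ^ 2 * exp (- (x ^ 2) / 2 + a * x / s)).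
    - apply Rmult_le_compat_r. left; apply exp_pos. apply pow_incr. nra.
    - replace (((1 + A) * exp (1 * x)) ^ 2 * exp (- (x ^ 2) / 2 + a * x / s)) with
        ((1 + A) ^ 2 * (exp (1 * x) * exp (1 * x) * exp (- (x ^ 2) / 2 + a * x / s))) by ring.
      rewrite <- !exp_plus. apply Rmult_le_compat_l. nra. apply exp_le_exp.
      unfold L. assert (0 <= (x - (a / s + 2)) ^ 2) by apply pow2_ge_0.
      replace (a * x / s) with ((a / s) * x) by (field; lra). nra. }
  assert (0 < (1 + Rpower x q) ^ 2) by nra.
  apply Rmult_le_reg_r with ((1 + Rpower x q) ^ 2); [lra|].
  replace (C * (1 + A) ^ 2 * exp (L ^ 2 / 2) / q * (q * Rpower x (q - 1) / (1 + Rpower x q) ^ 2) * (1 + Rpower x q) ^ 2)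
    with (C * Rpower x (q - 1) * ((1 + A) ^ 2 * exp (L ^ 2 / 2))) by (field; lra).
  replace (C * Rpower x (q - 1) * exp (- (x ^ 2) / 2 + a * x / s) * (1 + Rpower x q) ^ 2)
    with (C * Rpower x (q - 1) * ((1 + Rpower x q) ^ 2 * exp (- (x ^ 2) / 2 + a * x / s))) by ring.
  apply Rmult_le_compat_l; [nra|exact H3].
Qed.

Lemma NQ_is mu nu a b : 0 <= b -> 0 < mu -> -1 < nu -> 0 < a ->
  is_RInt_gen (nq mu nu a) (at_right b) (Rbar_locally p_infty) (NuttallQ mu nu a b) /\
  0 < NuttallQ mu nu a b.
Proof.
  intros Hb Hmu Hnu Ha.
  destruct (nq_dom mu nu a Hmu Hnu Ha) as [M [HM Hd]].
  assert (Hc : forall x, b < x -> continuous (nq mu nu a) x) by (intros; apply nq_cont; lra).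
  assert (Hp : forall x, b < x -> 0 <= nq mu nu a x) by (intros; left; apply nq_pos; lra).
  destruct (ex_gen_bounded (nq mu nu a) b M Hc Hp
    (dom_RInt_bound (nq mu nu a) b (mu + nu + 1) M Hb ltac:(lra) HM Hc ltac:(intros; apply Hd; lra)))
    as [L [HL1 HL2]].
  assert (E : NuttallQ mu nu a b = L) by exact (gen_unique (nq mu nu a) b L HL1).
  rewrite E. split; [exact HL1|].
  apply Rlt_le_trans with (RInt (nq mu nu a) (b + 1) (b + 2)); [|apply HL2; lra].
  assert (H0 := RInt_lt (fun _ => 0) (nq mu nu a) (b + 1) (b + 2) ltac:(lra)
     ltac:(intros; apply nq_cont; lra) ltac:(intros; apply continuous_const)
     ltac:(intros x Hx; apply nq_pos; lra)).
  rewrite RInt_const in H0. unfold scal in H0; simpl in H0; unfold mult in H0; simpl in H0. lra.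
Qed.

Lemma series_nonpos (a : nat -> R) : ex_series a -> (forall n, a n <= 0) -> Series a <= 0.
Proof.
  intros Hex Hn. apply series_le_bound; [exact Hex|]. intros N.
  induction N as [|N IH]; simpl; [apply Hn|]. pose proof (Hn (S N)); lra.
Qed.

Lemma ex_series_lin (a b : nat -> R) (al be : R) : ex_series a -> ex_series b ->
  ex_series (fun n => al * a n + be * b n).
Proof.
  intros Ha Hb. apply (ex_series_plus (K:=R_AbsRing) (V:=R_NormedModule) (fun n => al * a n) (fun n => be * b n)).
  apply (ex_series_scal_l (K:=R_AbsRing) (V:=R_NormedModule) al a Ha).
  apply (ex_series_scal_l (K:=R_AbsRing) (V:=R_NormedModule) be b Hb).
Qed.

Lemma least_nat (P : nat -> Prop) : (exists k, P k) -> exists k, P k /\ forall m, (m < k)%nat -> ~ P m.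
Proof.
  intros [k Hk]. revert Hk. pattern k. apply (well_founded_ind Wf_nat.lt_wf). clear k. intros k IH Hk.
  destruct (classic (exists m, (m < k)%nat /\ P m)) as [[m [Hm1 Hm2]]|Hn].
  - exact (IH m Hm1 Hm2).
  - exists k. split; [exact Hk|]. intros m Hm HP. apply Hn. exists m; auto.
Qed.

Lemma pow_exp y k : 0 < y -> y ^ k = exp (INR k * ln y).
Proof. intros Hy. rewrite <- Rpower_pow by lra. reflexivity. Qed.

Section Disc.
Variable d : nat -> R.
Hypothesis Hint : forall i j k, (i < j)%nat -> (j < k)%nat -> 0 < d i -> 0 < d k -> 0 < d j.
Hypothesis Hex : forall y, 0 < y -> ex_series (fun k => d k * y ^ k).
Let Phi y := Series (fun k => d k * y ^ k).

Lemma disc_qc y1 y2 y3 : 0 < y1 -> y1 < y2 -> y2 < y3 -> 0 < Phi y1 -> 0 < Phi y3 -> 0 < Phi y2.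
Proof.
  intros H1 H12 H23 P1 P3. apply Rnot_le_lt. intros P2.
  assert (Hne : exists k, 0 < d k).
  { apply NNPP. intros Hn. assert (Phi y1 <= 0); [|lra].
    apply series_nonpos. apply Hex; lra. intros n.
    assert (d n <= 0) by (apply Rnot_lt_le; intros h; apply Hn; exists n; exact h).
    pose proof (pow_lt y1 n H1). nra. }
  destruct (least_nat _ Hne) as [k1 [Hk1 Hk1m]].
  assert (Hlt1 : forall k, (k < k1)%nat -> d k <= 0).
  { intros k Hk. apply Rnot_lt_le. intros h. exact (Hk1m k Hk h). }
  set (p := ln y2 - ln y1). set (q := ln y3 - ln y2).
  assert (Hp : 0 < p) by (unfold p; pose proof (ln_increasing y1 y2 H1 H12); lra).
  assert (Hq : 0 < q) by (unfold q; pose proof (ln_increasing y2 y3 ltac:(lra) H23); lra).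
  assert (Eu : forall al be k, al * y1 ^ k - y2 ^ k + be * y3 ^ k = y2 ^ k * vfun al be p q (INR k)).
  { intros al be k. rewrite !(pow_exp _ k) by lra. unfold vfun, p, q.
    replace (al * exp (INR k * ln y1)) with (exp (INR k * ln y2) * (al * exp (- (ln y2 - ln y1) * INR k))).
    2: { rewrite Rmult_comm, Rmult_assoc, <- exp_plus. f_equal. f_equal. ring. }
    replace (be * exp (INR k * ln y3)) with (exp (INR k * ln y2) * (be * exp ((ln y3 - ln y2) * INR k))).
    2: { rewrite Rmult_comm, Rmult_assoc, <- exp_plus. f_equal. f_equal. ring. }
    ring. }
  assert (Hcomb : forall al be, ex_series (fun k => d k * (al * y1 ^ k - y2 ^ k + be * y3 ^ k)) /\
     Series (fun k => d k * (al * y1 ^ k - y2 ^ k + be * y3 ^ k)) = al * Phi y1 - Phi y2 + be * Phi y3).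
  { intros al be.
    assert (E : forall k, d k * (al * y1 ^ k - y2 ^ k + be * y3 ^ k) =
       (al * (d k * y1 ^ k) + (-1) * (d k * y2 ^ k)) + be * (d k * y3 ^ k)) by (intros; ring).
    pose proof (ex_series_lin _ _ al (-1) (Hex y1 ltac:(lra)) (Hex y2 ltac:(lra))) as X1.
    pose proof (ex_series_lin _ _ 1 be X1 (Hex y3 ltac:(lra))) as X2.
    split.
    - eapply ex_series_ext; [|exact X2]. intros k. simpl. rewrite E. ring.
    - rewrite (Series_ext _ _ E). rewrite Series_plus; [|exact X1|].
      rewrite Series_plus. rewrite !Series_scal_l. unfold Phi. ring.
      apply (ex_series_scal_l (K:=R_AbsRing) (V:=R_NormedModule) al _ (Hex y1 ltac:(lra))).
      apply (ex_series_scal_l (K:=R_AbsRing) (V:=R_NormedModule) (-1) _ (Hex y2 ltac:(lra))).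
      apply (ex_series_scal_l (K:=R_AbsRing) (V:=R_NormedModule) be _ (Hex y3 ltac:(lra))). }
  destruct (classic (exists N, forall k, 0 < d k -> (k <= N)%nat)) as [Hb|Hub].
  -
    destruct (least_nat _ Hb) as [N0 [HN0 HN0m]].
    assert (Hk1N : (k1 <= N0)%nat) by (apply HN0; exact Hk1).
    assert (HdN : 0 < d N0).
    { destruct (Nat.eq_dec N0 k1) as [->|Hne']; [exact Hk1|].
      apply NNPP. intros Hn. apply (HN0m (N0 - 1)%nat). lia.
      intros k Hk. destruct (Nat.eq_dec k N0) as [->|]; [lra|]. specialize (HN0 k Hk). lia. }
    assert (Hin : forall k, (k1 <= k <= N0)%nat -> 0 < d k).
    { intros k Hk. destruct (Nat.eq_dec k k1) as [->|]; [exact Hk1|].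
      destruct (Nat.eq_dec k N0) as [->|]; [exact HdN|]. apply (Hint k1 k N0); auto; lia. }
    assert (Hout : forall k, (N0 < k)%nat -> d k <= 0).
    { intros k Hk. apply Rnot_lt_le. intros h. specialize (HN0 k h). lia. }
    destruct (three_term p q (INR k1 - 1/2) (INR N0 + 1/2) Hp Hq) as (al & be & Hal & Hbe & Hv).
    { pose proof (le_INR _ _ Hk1N). lra. }
    destruct (Hcomb al be) as [Hx HS].
    assert (Series (fun k => d k * (al * y1 ^ k - y2 ^ k + be * y3 ^ k)) <= 0).
    { apply series_nonpos; [exact Hx|]. intros k. rewrite Eu.
      pose proof (pow_lt y2 k ltac:(lra)).
      destruct (Compare_dec.le_lt_dec k1 k) as [Hk|Hk]; [destruct (Compare_dec.le_lt_dec k N0) as [Hk'|Hk']|].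
      - pose proof (Hin k (conj Hk Hk')). apply le_INR in Hk. apply le_INR in Hk'.
        destruct (Hv (INR k)) as [Hv1 _]. pose proof (Hv1 ltac:(lra)). rewrite <- Rmult_assoc. assert (0 < d k * y2 ^ k) by nra. nra.
      - pose proof (Hout k Hk'). assert (Hk2 : INR N0 + 1 <= INR k) by (rewrite <- S_INR; apply le_INR; lia).
        destruct (Hv (INR k)) as [_ Hv2]. pose proof (Hv2 ltac:(lra)). rewrite <- Rmult_assoc. assert (d k * y2 ^ k <= 0) by nra. nra.
      - pose proof (Hlt1 k Hk). assert (Hk2 : INR k + 1 <= INR k1) by (rewrite <- S_INR; apply le_INR; lia).
        destruct (Hv (INR k)) as [_ Hv2]. pose proof (Hv2 ltac:(lra)). rewrite <- Rmult_assoc. assert (d k * y2 ^ k <= 0) by nra. nra. }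
    rewrite HS in H. nra.
  -
    assert (Hin : forall k, (k1 <= k)%nat -> 0 < d k).
    { intros k Hk. destruct (Nat.eq_dec k k1) as [->|]; [exact Hk1|].
      apply NNPP. intros Hn. apply Hub. exists k. intros m Hm.
      destruct (Compare_dec.le_lt_dec m k) as [|Hmk]; [assumption|].
      exfalso. apply Hn. apply (Hint k1 k m); auto; lia. }
    set (al := exp (p * (INR k1 - 1/2))).
    destruct (Hcomb al 0) as [Hx HS].
    assert (Series (fun k => d k * (al * y1 ^ k - y2 ^ k + 0 * y3 ^ k)) <= 0).
    { apply series_nonpos; [exact Hx|]. intros k. rewrite Eu.
      pose proof (pow_lt y2 k ltac:(lra)). unfold vfun. rewrite Rmult_0_l, Rplus_0_r.
      destruct (Compare_dec.le_lt_dec k1 k) as [Hk|Hk].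
      - pose proof (Hin k Hk). apply le_INR in Hk.
        assert (al * exp (- p * INR k) <= 1).
        { unfold al. rewrite <- exp_plus. apply Rle_trans with (exp 0); [apply exp_le_exp; nra|rewrite exp_0; lra]. }
        rewrite <- Rmult_assoc. assert (0 < d k * y2 ^ k) by nra. nra.
      - pose proof (Hlt1 k Hk). assert (Hk2 : INR k + 1 <= INR k1) by (rewrite <- S_INR; apply le_INR; lia).
        assert (1 <= al * exp (- p * INR k)).
        { unfold al. rewrite <- exp_plus. apply Rle_trans with (exp 0); [rewrite exp_0; lra|apply exp_le_exp; nra]. }
        rewrite <- Rmult_assoc. assert (d k * y2 ^ k <= 0) by nra. nra. }
    rewrite HS in H. assert (0 < al) by apply exp_pos. nra.
Qed.
End Disc.

Lemma Rpower_half_step a nu k : 0 < a ->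
  Rpower (a / 2) (2 * INR (S k) + nu) = Rpower (a / 2) (2 * INR k + nu) * (a / 2) ^ 2.
Proof.
  intros Ha. rewrite S_INR.
  replace (2 * (INR k + 1) + nu) with ((2 * INR k + nu) + INR 2) by (simpl; ring).
  rewrite Rpower_plus, Rpower_pow by lra. reflexivity.
Qed.

Lemma Rpower_half_split a nu k : 0 < a ->
  Rpower (a / 2) (2 * INR k + nu) = Rpower (a / 2) nu * ((a / 2) ^ 2) ^ k.
Proof.
  intros Ha. rewrite Rplus_comm, Rpower_plus.
  replace (2 * INR k) with (INR (2 * k)) by (rewrite mult_INR; reflexivity).
  rewrite Rpower_pow by lra. rewrite pow_mult. reflexivity.
Qed.

Definition coefB (a nu : R) (k : nat) := Rpower (a / 2) (2 * INR k + nu) * cB nu k.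

Lemma coefB_pos a nu k : 0 < a -> -1 < nu -> 0 < coefB a nu k.
Proof. intros. unfold coefB. apply Rmult_lt_0_compat. apply Rpower_pos'. apply cB_pos; lra. Qed.

Lemma coefB_step a nu k : 0 < a -> -1 < nu ->
  coefB a nu (S k) = coefB a nu k * (a / 2) ^ 2 / ((INR k + 1) * (INR k + nu + 1)).
Proof.
  intros Ha Hnu. unfold coefB. rewrite Rpower_half_step, cB_rec by lra.
  pose proof (pos_INR k). unfold Rdiv. ring.
Qed.

Lemma coefB_ex a nu y : 0 < a -> -1 < nu -> 0 < y -> ex_series (fun k => coefB a nu k * y ^ k).
Proof.
  intros Ha Hnu Hy.
  assert (H : ex_series (fun k => cB nu k * ((a / 2) ^ 2 * y) ^ k)).
  { apply ex_pseries_R. apply CV_radius_inside. rewrite cB_radius by lra. simpl; auto. }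
  apply (ex_series_scal_l (K:=R_AbsRing) (V:=R_NormedModule) (Rpower (a / 2) nu)) in H.
  eapply ex_series_ext; [|exact H]. intros k. simpl. unfold scal; simpl; unfold mult; simpl.
  unfold coefB. rewrite Rpower_half_split by lra. replace ((a / 2) ^ 2) with (a / 2 * (a / 2 * 1)) by (simpl; ring). rewrite Rpow_mult_distr. ring.
Qed.

Lemma BesselI_coef a nu x : 0 < a -> -1 < nu -> 0 < x ->
  forall sh nu', nu = nu' + 2 * INR sh ->
  BesselI nu (a * x) = Rpower x nu' * Series (fun k => coefB a nu k * (x ^ 2) ^ (sh + k)).
Proof.
  intros Ha Hnu Hx sh nu' Hnn. unfold BesselI. rewrite <- Series_scal_l. apply Series_ext. intros k.
  unfold coefB, cB.
  replace (a * x / 2) with ((a / 2) * x) by field.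
  rewrite <- Rpower_mult_distr by lra.
  replace (Rpower x (2 * INR k + nu)) with (Rpower x nu' * (x ^ 2) ^ (sh + k)).
  2: { rewrite Hnn. replace (2 * INR k + (nu' + 2 * INR sh)) with (nu' + INR (2 * (sh + k))).
       rewrite Rpower_plus, Rpower_pow by lra. rewrite pow_mult. reflexivity.
       rewrite mult_INR, plus_INR. simpl. ring. }
  unfold Rdiv. ring.
Qed.

Section Spec.
Variables (nu1 nu2 a1 a2 : R) (l : nat).
Hypotheses (Hnu1 : -1 < nu1) (Hnu2 : -1 < nu2) (Hl : (0 < l)%nat)
  (Hnn : nu1 - nu2 = 2 * INR l) (Ha1 : 0 < a1) (Ha12 : a1 <= a2).

Definition Qk (k : nat) := coefB a2 nu2 k.
Definition Pk (k : nat) := if Nat.ltb k l then 0 else coefB a1 nu1 (k - l).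
Definition e1 := exp (- (a1 ^ 2) / 2).
Definition e2 := exp (- (a2 ^ 2) / 2).
Definition dk (c : R) (k : nat) := e1 * Pk k - c * (e2 * Qk k).

Lemma Pk_lt k : (k < l)%nat -> Pk k = 0.
Proof. intros H. unfold Pk. apply Nat.ltb_lt in H. rewrite H. reflexivity. Qed.

Lemma Pk_ge k : (l <= k)%nat -> Pk k = coefB a1 nu1 (k - l).
Proof. intros H. unfold Pk. destruct (Nat.ltb_spec k l); [lia|reflexivity]. Qed.

Lemma Pk_ex y : 0 < y -> ex_series (fun k => Pk k * y ^ k).
Proof.
  intros Hy. apply (ex_series_incr_n (K:=R_AbsRing) (V:=R_NormedModule) _ l).
  pose proof (coefB_ex a1 nu1 y Ha1 Hnu1 Hy) as H.
  apply (ex_series_scal_l (K:=R_AbsRing) (V:=R_NormedModule) (y ^ l)) in H.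
  eapply ex_series_ext; [|exact H]. intros k. simpl. unfold scal; simpl; unfold mult; simpl.
  rewrite Pk_ge by lia. replace (l + k - l)%nat with k by lia. rewrite pow_add. ring.
Qed.

Lemma Qk_ex y : 0 < y -> ex_series (fun k => Qk k * y ^ k).
Proof. intros Hy. apply coefB_ex; lra. Qed.

Lemma dk_ex c y : 0 < y -> ex_series (fun k => dk c k * y ^ k).
Proof.
  intros Hy. pose proof (ex_series_lin _ _ e1 (- c * e2) (Pk_ex y Hy) (Qk_ex y Hy)) as H.
  eapply ex_series_ext; [|exact H]. intros k. simpl. unfold dk. ring.
Qed.

Lemma BesselI2_rep x : 0 < x -> BesselI nu2 (a2 * x) = Rpower x nu2 * Series (fun k => Qk k * (x ^ 2) ^ k).
Proof.
  intros Hx. rewrite (BesselI_coef a2 nu2 x ltac:(lra) Hnu2 Hx 0 nu2 ltac:(simpl; ring)).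
  reflexivity.
Qed.

Lemma BesselI1_rep x : 0 < x -> BesselI nu1 (a1 * x) = Rpower x nu2 * Series (fun k => Pk k * (x ^ 2) ^ k).
Proof.
  intros Hx. rewrite (BesselI_coef a1 nu1 x Ha1 Hnu1 Hx l nu2 ltac:(lra)).
  f_equal. assert (Hy : 0 < x ^ 2) by nra.
  rewrite (Series_incr_n (fun k => Pk k * (x ^ 2) ^ k) l Hl (Pk_ex _ Hy)).
  rewrite sum_eq_R0.
  2: { intros n Hn. rewrite Pk_lt by lia. ring. }
  rewrite Rplus_0_l. apply Series_ext. intros k. rewrite Pk_ge by lia.
  replace (l + k - l)%nat with k by lia. reflexivity.
Qed.

Lemma psi_rep c x : 0 < x ->
  exp (- (x ^ 2 + a1 ^ 2) / 2) * BesselI nu1 (a1 * x) - c * (exp (- (x ^ 2 + a2 ^ 2) / 2) * BesselI nu2 (a2 * x))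
  = exp (- (x ^ 2) / 2) * Rpower x nu2 * Series (fun k => dk c k * (x ^ 2) ^ k).
Proof.
  intros Hx. rewrite BesselI1_rep, BesselI2_rep by lra. assert (Hy : 0 < x ^ 2) by nra.
  assert (E : forall a, exp (- (x ^ 2 + a ^ 2) / 2) = exp (- (x ^ 2) / 2) * exp (- (a ^ 2) / 2)).
  { intros a. rewrite <- exp_plus. f_equal. field. }
  rewrite !E. unfold dk.
  rewrite (Series_ext (fun k => (e1 * Pk k - c * (e2 * Qk k)) * (x ^ 2) ^ k) (fun k => e1 * (Pk k * (x ^ 2) ^ k) - (c * e2) * (Qk k * (x ^ 2) ^ k))).
  2: { intros; ring. }
  rewrite Series_minus.
  2: { apply (ex_series_scal_l (K:=R_AbsRing) (V:=R_NormedModule) e1 _ (Pk_ex _ Hy)). }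
  2: { apply (ex_series_scal_l (K:=R_AbsRing) (V:=R_NormedModule) (c * e2) _ (Qk_ex _ Hy)). }
  rewrite !Series_scal_l. unfold e1, e2. ring.
Qed.


Definition rho (k : nat) := e1 * Pk k / (e2 * Qk k).
Definition rr (k : nat) := (a1 / 2) ^ 2 * ((INR k + 1) * (INR k + nu2 + 1)) /
   ((a2 / 2) ^ 2 * ((INR k - INR l + 1) * (INR k + INR l + nu2 + 1))).

Lemma e1_pos : 0 < e1. Proof. apply exp_pos. Qed.
Lemma e2_pos : 0 < e2. Proof. apply exp_pos. Qed.
Lemma Qk_pos k : 0 < Qk k. Proof. apply coefB_pos; lra. Qed.

Lemma rho_lt k : (k < l)%nat -> rho k = 0.
Proof. intros H. unfold rho. rewrite Pk_lt by exact H. unfold Rdiv. ring. Qed.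

Lemma rho_pos k : (l <= k)%nat -> 0 < rho k.
Proof.
  intros H. unfold rho. rewrite Pk_ge by exact H.
  pose proof e1_pos. pose proof e2_pos. pose proof (Qk_pos k). pose proof (coefB_pos a1 nu1 (k - l) Ha1 Hnu1).
  apply Rdiv_lt_0_compat; nra.
Qed.

Lemma rho_step k : (l <= k)%nat -> rho (S k) = rho k * rr k.
Proof.
  intros H. unfold rho, rr. rewrite !Pk_ge by lia.
  replace (S k - l)%nat with (S (k - l)) by lia.
  unfold Qk. rewrite !coefB_step by lra.
  rewrite minus_INR by exact H.
  assert (Hn1 : nu1 = nu2 + 2 * INR l) by lra.
  pose proof (le_INR _ _ H). pose proof (pos_INR k). pose proof (pos_INR l).
  pose proof e1_pos. pose proof e2_pos. pose proof (coefB_pos a1 nu1 (k - l) Ha1 Hnu1).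
  pose proof (coefB_pos a2 nu2 k ltac:(lra) Hnu2).
  rewrite Hn1. field. repeat split; try lra.
Qed.

Lemma rr_pos k : (l <= k)%nat -> 0 < rr k.
Proof.
  intros H. unfold rr. pose proof (le_INR _ _ H). pose proof (pos_INR k). pose proof (pos_INR l).
  apply Rdiv_lt_0_compat. apply Rmult_lt_0_compat. nra. apply Rmult_lt_0_compat; lra.
  apply Rmult_lt_0_compat. nra. apply Rmult_lt_0_compat; lra.
Qed.

Lemma rr_dec k : (l <= k)%nat -> rr (S k) < rr k.
Proof.
  intros H. unfold rr. rewrite S_INR.
  pose proof (le_INR _ _ H). pose proof (pos_INR k).
  assert (HL : 1 <= INR l) by (apply (le_INR 1); lia).
  set (K := (a1 / 2) ^ 2 / (a2 / 2) ^ 2).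
  assert (HK : 0 < K) by (unfold K; apply Rdiv_lt_0_compat; nra).
  set (A := INR k - INR l + 1). set (B := INR k + INR l + nu2 + 1). set (D := INR l * (nu2 + INR l)).
  assert (HA : 1 <= A) by (unfold A; lra). assert (HB : 0 < B) by (unfold B; lra).
  assert (HD : 0 < D) by (unfold D; nra).
  assert (E1 : (a1 / 2) ^ 2 * ((INR k + 1) * (INR k + nu2 + 1)) / ((a2 / 2) ^ 2 * (A * B)) = K * (1 + D / (A * B))).
  { unfold K, A, B, D. field. repeat split; try nra. }
  assert (E2 : (a1 / 2) ^ 2 * ((INR k + 1 + 1) * (INR k + 1 + nu2 + 1)) /
      ((a2 / 2) ^ 2 * ((INR k + 1 - INR l + 1) * (INR k + 1 + INR l + nu2 + 1))) = K * (1 + D / ((A + 1) * (B + 1)))).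
  { unfold K, A, B, D. field. repeat split; try nra. }
  fold A B. rewrite E1, E2.
  apply Rmult_lt_compat_l; [exact HK|]. apply Rplus_lt_compat_l.
  unfold Rdiv. apply Rmult_lt_compat_l; [exact HD|]. apply Rinv_lt_contravar; nra.
Qed.

Lemma rr_mono m n : (l <= m)%nat -> (m <= n)%nat -> rr n <= rr m.
Proof.
  intros Hm Hmn. induction n as [|n IH].
  - replace m with 0%nat by lia. lra.
  - destruct (Nat.eq_dec m (S n)) as [->|Hne]; [lra|].
    pose proof (rr_dec n ltac:(lia)). specialize (IH ltac:(lia)). lra.
Qed.

Lemma rho_up i n : (l <= i)%nat -> (forall m, (i <= m < i + n)%nat -> 1 <= rr m) -> rho i <= rho (i + n).
Proof.
  intros Hi Hr. induction n as [|n IH].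
  - rewrite Nat.add_0_r. lra.
  - rewrite Nat.add_succ_r, rho_step by lia.
    pose proof (Hr (i + n)%nat ltac:(lia)). pose proof (rho_pos (i + n) ltac:(lia)).
    assert (rho i <= rho (i + n)) by (apply IH; intros; apply Hr; lia). nra.
Qed.

Lemma rho_down j n : (l <= j)%nat -> (forall m, (j <= m)%nat -> rr m <= 1) -> rho (j + n) <= rho j.
Proof.
  intros Hj Hr. induction n as [|n IH].
  - rewrite Nat.add_0_r. lra.
  - rewrite Nat.add_succ_r, rho_step by lia.
    pose proof (Hr (j + n)%nat ltac:(lia)). pose proof (rho_pos (j + n) ltac:(lia)).
    pose proof (rr_pos (j + n) ltac:(lia)). nra.
Qed.

Lemma dk_eq c k : dk c k = e2 * Qk k * (rho k - c).
Proof.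
  unfold dk, rho. pose proof e2_pos. pose proof (Qk_pos k). field. nra.
Qed.

Lemma dk_sign c k : 0 < dk c k <-> c < rho k.
Proof.
  rewrite dk_eq. pose proof e2_pos. pose proof (Qk_pos k).
  split; intros H1. 
  - apply Rnot_le_lt. intros H2. assert (e2 * Qk k * (rho k - c) <= 0); [|lra].
    assert (0 < e2 * Qk k) by nra. nra.
  - assert (0 < e2 * Qk k) by nra. nra.
Qed.

Lemma dk_int c i j k : (i < j)%nat -> (j < k)%nat -> 0 < dk c i -> 0 < dk c k -> 0 < dk c j.
Proof.
  intros Hij Hjk Hi Hk. apply dk_sign in Hi. apply dk_sign in Hk. apply dk_sign.
  destruct (Compare_dec.le_lt_dec l j) as [Hj|Hj].
  2: { rewrite (rho_lt j) by lia. rewrite (rho_lt i) in Hi by lia. lra. }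
  destruct (Compare_dec.le_lt_dec l i) as [Hli|Hli].
  2: { rewrite rho_lt in Hi by lia. pose proof (rho_pos j Hj). lra. }
  destruct (Rle_or_lt 1 (rr (j - 1))) as [Hr|Hr].
  - assert (rho i <= rho (i + (j - i))).
    { apply rho_up; [exact Hli|]. intros m Hm. pose proof (rr_mono m (j - 1) ltac:(lia) ltac:(lia)). lra. }
    replace (i + (j - i))%nat with j in H by lia. lra.
  - assert (rho (j + (k - j)) <= rho j).
    { apply rho_down; [exact Hj|]. intros m Hm. pose proof (rr_mono (j - 1) m ltac:(lia) ltac:(lia)). lra. }
    replace (j + (k - j))%nat with k in H by lia. lra.
Qed.

Lemma Phi_qc c y1 y2 y3 : 0 < y1 -> y1 < y2 -> y2 < y3 ->
  0 < Series (fun k => dk c k * y1 ^ k) -> 0 < Series (fun k => dk c k * y3 ^ k) ->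
  0 < Series (fun k => dk c k * y2 ^ k).
Proof.
  intros. apply (disc_qc (dk c) (dk_int c) (dk_ex c) y1 y2 y3); assumption.
Qed.

End Spec.

Lemma gen_nonpos (h : R -> R) b L : is_RInt_gen h (at_right b) (Rbar_locally p_infty) L ->
  (forall x, b < x -> h x <= 0) -> L <= 0.
Proof.
  intros H Hn.
  pose proof (is_RInt_gen_opp h L H) as H2.
  assert (F1 : filter_prod (at_right b) (Rbar_locally p_infty) (fun ab : R * R => fst ab <= snd ab)).
  { apply fp_intro; intros; simpl; lra. }
  assert (F2 : filter_prod (at_right b) (Rbar_locally p_infty)
     (fun ab : R * R => forall x : R, fst ab <= x <= snd ab -> norm (h x) <= opp (h x))).
  { apply fp_intro. intros x y Hx Hx1 Hy z Hz. simpl in Hz.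
    assert (h z <= 0) by (apply Hn; lra).
    change (Rabs (h z) <= - h z). rewrite Rabs_left1; lra. }
  pose proof (RInt_gen_norm (V:=R_CompleteNormedModule) h (fun y => opp (h y)) L (opp L) F1 F2 H H2) as H3.
  change (Rabs L <= - L) in H3. pose proof (Rle_abs L). lra.
Qed.

Lemma gen_lin3 (f1 f2 f3 : R -> R) b L1 L2 L3 al be :
  is_RInt_gen f1 (at_right b) (Rbar_locally p_infty) L1 ->
  is_RInt_gen f2 (at_right b) (Rbar_locally p_infty) L2 ->
  is_RInt_gen f3 (at_right b) (Rbar_locally p_infty) L3 ->
  is_RInt_gen (fun x => al * f1 x - f2 x + be * f3 x) (at_right b) (Rbar_locally p_infty)
    (al * L1 - L2 + be * L3).
Proof.
  intros H1 H2 H3.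
  pose proof (is_RInt_gen_plus _ _ _ _ (is_RInt_gen_minus _ _ _ _ (is_RInt_gen_scal _ al _ H1) H2)
     (is_RInt_gen_scal _ be _ H3)) as H.
  exact H.
Qed.

Lemma sup_ex (E : R -> Prop) : (exists x, E x) -> (exists M, forall x, E x -> x <= M) ->
  exists m, (forall x, E x -> x <= m) /\ (forall M, (forall x, E x -> x <= M) -> m <= M).
Proof.
  intros He [M HM]. destruct (completeness E) as [m [H1 H2]].
  - exists M. exact HM.
  - exact He.
  - exists m. split; [exact H1|exact H2].
Qed.

Lemma inf_ex (E : R -> Prop) : (exists x, E x) -> (exists M, forall x, E x -> M <= x) ->
  exists m, (forall x, E x -> m <= x) /\ (forall M, (forall x, E x -> M <= x) -> M <= m).
Proof.
  intros [x0 He] [M HM].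
  destruct (sup_ex (fun y => E (- y))) as [m [H1 H2]].
  - exists (- x0). rewrite Ropp_involutive. exact He.
  - exists (- M). intros y Hy. specialize (HM _ Hy). lra.
  - exists (- m). split.
    + intros x Hx. assert (- x <= m) by (apply H1; rewrite Ropp_involutive; exact Hx). lra.
    + intros M' HM'. assert (m <= - M'); [|lra]. apply H2. intros y Hy. specialize (HM' _ Hy). lra.
Qed.

Section Mu.
Variables (b nu1 nu2 a1 a2 : R) (l : nat).
Hypotheses (Hb : 0 <= b) (Hnu1 : -1 < nu1) (Hnu2 : -1 < nu2) (Hl : (0 < l)%nat)
  (Hnn : nu1 - nu2 = 2 * INR l) (Ha1 : 0 < a1) (Ha12 : a1 <= a2).

Definition FF mu := NuttallQ mu nu1 a1 b.
Definition GG mu := NuttallQ mu nu2 a2 b.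
Definition psi c x := exp (- (x ^ 2 + a1 ^ 2) / 2) * BesselI nu1 (a1 * x)
   - c * (exp (- (x ^ 2 + a2 ^ 2) / 2) * BesselI nu2 (a2 * x)).

Lemma psi_int mu c : 0 < mu ->
  is_RInt_gen (fun x => Rpower x mu * psi c x) (at_right b) (Rbar_locally p_infty) (FF mu - c * GG mu).
Proof.
  intros Hmu.
  destruct (NQ_is mu nu1 a1 b Hb Hmu Hnu1 Ha1) as [H1 _].
  destruct (NQ_is mu nu2 a2 b Hb Hmu Hnu2 ltac:(lra)) as [H2 _].
  pose proof (is_RInt_gen_minus _ _ _ _ H1 (is_RInt_gen_scal _ c _ H2)) as H.
  eapply is_RInt_gen_ext; [|exact H].
  apply fp_intro. intros x y _ _ _ z _. unfold nq, psi. unfold minus, plus, opp, scal; simpl.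
  unfold mult; simpl. ring.
Qed.

Lemma psi_sign c x : 0 < x -> (0 < psi c x <-> 0 < Series (fun k => dk nu1 nu2 a1 a2 l c k * (x ^ 2) ^ k)).
Proof.
  intros Hx. unfold psi. rewrite (psi_rep nu1 nu2 a1 a2 l Hnu1 Hnu2 Hl Hnn Ha1 Ha12 c x Hx).
  assert (0 < exp (- (x ^ 2) / 2) * Rpower x nu2) by (apply Rmult_lt_0_compat; [apply exp_pos|apply Rpower_pos']).
  split; intros H1.
  - apply Rnot_le_lt. intros H2. assert (exp (- (x ^ 2) / 2) * Rpower x nu2 * Series (fun k => dk nu1 nu2 a1 a2 l c k * (x ^ 2) ^ k) <= 0) by nra. lra.
  - nra.
Qed.

Lemma psi_conv c x z w : 0 < x -> x < z -> z < w -> 0 < psi c x -> 0 < psi c w -> 0 < psi c z.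
Proof.
  intros Hx Hxz Hzw Px Pw. apply psi_sign; [lra|]. apply psi_sign in Px; [|lra]. apply psi_sign in Pw; [|lra].
  apply (Phi_qc nu1 nu2 a1 a2 l Hnu1 Hnu2 Hl Hnn Ha1 Ha12 c (x ^ 2) (z ^ 2) (w ^ 2)); try nra; assumption.
Qed.

Lemma psi_cont c x : 0 < x -> continuous (psi c) x.
Proof.
  intros Hx. unfold psi.
  apply (continuous_minus (V:=R_NormedModule) (fun x => exp (- (x ^ 2 + a1 ^ 2) / 2) * BesselI nu1 (a1 * x))
     (fun x => c * (exp (- (x ^ 2 + a2 ^ 2) / 2) * BesselI nu2 (a2 * x)))).
  - apply (continuous_mult (K:=R_AbsRing) (fun x => exp (- (x ^ 2 + a1 ^ 2) / 2)) (fun x => BesselI nu1 (a1 * x))).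
    + apply (ex_derive_continuous (K:=R_AbsRing) (V:=R_NormedModule)). auto_derive. auto.
    + apply (continuous_comp (fun x => a1 * x) (BesselI nu1)).
      * apply (ex_derive_continuous (K:=R_AbsRing) (V:=R_NormedModule)). auto_derive. auto.
      * apply BesselI_cont; nra.
  - apply (continuous_scal_r (K:=R_AbsRing) (V:=R_NormedModule) c (fun x => exp (- (x ^ 2 + a2 ^ 2) / 2) * BesselI nu2 (a2 * x))).
    apply (continuous_mult (K:=R_AbsRing) (fun x => exp (- (x ^ 2 + a2 ^ 2) / 2)) (fun x => BesselI nu2 (a2 * x))).
    + apply (ex_derive_continuous (K:=R_AbsRing) (V:=R_NormedModule)). auto_derive. auto.
    + apply (continuous_comp (fun x => a2 * x) (BesselI nu2)).
      * apply (ex_derive_continuous (K:=R_AbsRing) (V:=R_NormedModule)). auto_derive. auto.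
      * apply BesselI_cont; nra.
Qed.


Lemma GG_pos mu : 0 < mu -> 0 < GG mu.
Proof. intros. apply (NQ_is mu nu2 a2 b Hb H Hnu2 ltac:(lra)). Qed.
Lemma FF_pos mu : 0 < mu -> 0 < FF mu.
Proof. intros. apply (NQ_is mu nu1 a1 b Hb H Hnu1 Ha1). Qed.

Lemma u_vfun al be mu1 mu2 mu3 x : 0 < x ->
  al * Rpower x mu1 - Rpower x mu2 + be * Rpower x mu3 =
  Rpower x mu2 * vfun al be (mu2 - mu1) (mu3 - mu2) (ln x).
Proof.
  intros Hx. unfold vfun, Rpower.
  replace (mu1 * ln x) with (mu2 * ln x + - (mu2 - mu1) * ln x) by ring.
  replace (mu3 * ln x) with (mu2 * ln x + (mu3 - mu2) * ln x) by ring.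
  rewrite !exp_plus. ring.
Qed.

Lemma noval mu1 mu2 mu3 : 0 < mu1 -> mu1 < mu2 -> mu2 < mu3 ->
  ~ (FF mu2 / GG mu2 < FF mu1 / GG mu1 /\ FF mu2 / GG mu2 < FF mu3 / GG mu3).
Proof.
  intros H1 H12 H23 [R1 R3].
  pose proof (GG_pos mu1 H1) as G1. pose proof (GG_pos mu2 ltac:(lra)) as G2. pose proof (GG_pos mu3 ltac:(lra)) as G3.
  set (c := (FF mu2 / GG mu2 + Rmin (FF mu1 / GG mu1) (FF mu3 / GG mu3)) / 2).
  assert (Hm : FF mu2 / GG mu2 < Rmin (FF mu1 / GG mu1) (FF mu3 / GG mu3)) by (apply Rmin_glb_lt; lra).
  pose proof (Rmin_l (FF mu1 / GG mu1) (FF mu3 / GG mu3)). pose proof (Rmin_r (FF mu1 / GG mu1) (FF mu3 / GG mu3)).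
  assert (Hc1 : c < FF mu1 / GG mu1) by (unfold c; lra).
  assert (Hc3 : c < FF mu3 / GG mu3) by (unfold c; lra).
  assert (Hc2 : FF mu2 / GG mu2 < c) by (unfold c; lra).
  assert (P1 : 0 < FF mu1 - c * GG mu1).
  { apply Rmult_lt_reg_r with (/ GG mu1). apply Rinv_0_lt_compat; lra.
    rewrite Rmult_minus_distr_r, Rmult_assoc, Rinv_r, Rmult_0_l by lra. unfold Rdiv in Hc1. lra. }
  assert (P3 : 0 < FF mu3 - c * GG mu3).
  { apply Rmult_lt_reg_r with (/ GG mu3). apply Rinv_0_lt_compat; lra.
    rewrite Rmult_minus_distr_r, Rmult_assoc, Rinv_r, Rmult_0_l by lra. unfold Rdiv in Hc3. lra. }
  assert (P2 : FF mu2 - c * GG mu2 < 0).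
  { apply Rmult_lt_reg_r with (/ GG mu2). apply Rinv_0_lt_compat; lra.
    rewrite Rmult_minus_distr_r, Rmult_assoc, Rinv_r, Rmult_0_l by lra. unfold Rdiv in Hc2. lra. }
  pose proof (psi_int mu1 c H1) as I1. pose proof (psi_int mu2 c ltac:(lra)) as I2.
  pose proof (psi_int mu3 c ltac:(lra)) as I3.
  set (p := mu2 - mu1). set (q := mu3 - mu2).
  assert (Hp : 0 < p) by (unfold p; lra). assert (Hq : 0 < q) by (unfold q; lra).
  assert (Ucon : forall al be, 0 <= al -> 0 <= be ->
     (forall x, b < x -> vfun al be p q (ln x) * psi c x <= 0) -> False).
  { intros al be Hal Hbe Hv.
    pose proof (gen_lin3 _ _ _ b _ _ _ al be I1 I2 I3) as I.
    assert (I' : is_RInt_gen (fun x => Rpower x mu2 * (vfun al be p q (ln x) * psi c x)) (at_right b)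
       (Rbar_locally p_infty) (al * (FF mu1 - c * GG mu1) - (FF mu2 - c * GG mu2) + be * (FF mu3 - c * GG mu3))).
    { eapply is_RInt_gen_ext; [|exact I]. apply fp_intro. intros x y Hx Hx1 Hy z Hz. simpl in Hz. rewrite Rmin_left in Hz by lra.
      assert (0 < z) by lra.
      match goal with |- ?a = ?b => change (@eq R a b) end. transitivity ((al * Rpower z mu1 - Rpower z mu2 + be * Rpower z mu3) * psi c z); [ring|].
      rewrite (u_vfun al be mu1 mu2 mu3 z) by lra. fold p q. ring. }
    apply gen_nonpos in I'.
    - assert (0 <= al * (FF mu1 - c * GG mu1)) by nra. assert (0 <= be * (FF mu3 - c * GG mu3)) by nra. lra.
    - intros x Hx. pose proof (Rpower_pos' x mu2). pose proof (Hv x Hx). nra. }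
  set (S := fun x => b < x /\ 0 < psi c x).
  assert (Hne : exists x, S x).
  { apply NNPP. intros Hn. apply gen_nonpos in I1; [lra|]. intros x Hx.
    assert (psi c x <= 0) by (apply Rnot_lt_le; intros h; apply Hn; exists x; split; assumption).
    pose proof (Rpower_pos' x mu1). nra. }
  assert (Hlb : exists M, forall x, S x -> M <= x) by (exists b; intros x [h _]; lra).
  destruct (inf_ex S Hne Hlb) as [x1 [Hx1a Hx1b]].
  assert (Hbx1 : b <= x1) by (apply Hx1b; intros x [h _]; lra).
  assert (Hbelow : forall x, b < x -> x < x1 -> psi c x <= 0).
  { intros x Hx Hxx. apply Rnot_lt_le. intros h. pose proof (Hx1a x (conj Hx h)). lra. }
  assert (Hinside : forall x, x1 < x -> (exists s, S s /\ x < s) -> 0 < psi c x).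
  { intros x Hx [s2 [[Hs2 Ps2] Hxs2]].
    assert (Hs1e : exists s1, S s1 /\ s1 < x).
    { apply NNPP. intros Hn. assert (x <= x1); [|lra]. apply Hx1b. intros y Hy.
      apply Rnot_lt_le. intros h. apply Hn. exists y. split; assumption. }
    destruct Hs1e as [s1 [[Hs1 Ps1] Hs1x]].
    apply (psi_conv c s1 x s2); try assumption; lra. }
  destruct (classic (exists M, forall x, S x -> x <= M)) as [Hbd|Hubd].
  - destruct (sup_ex S Hne Hbd) as [x2 [Hx2a Hx2b]].
    assert (Hbx2 : b < x2) by (destruct Hne as [s0 [Hs0 Ps0]]; pose proof (Hx2a s0 (conj Hs0 Ps0)); lra).
    assert (Habove : forall x, x2 < x -> psi c x <= 0).
    { intros x Hx. apply Rnot_lt_le. intros h. assert (Hbx : b < x) by lra. pose proof (Hx2a x (conj Hbx h)). lra. }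
    assert (Hin2 : forall x, x1 < x -> x < x2 -> 0 < psi c x).
    { intros x Hx Hx'. apply Hinside; [exact Hx|]. apply NNPP. intros Hn.
      assert (x2 <= x); [|lra]. apply Hx2b. intros y Hy. apply Rnot_lt_le. intros h. apply Hn. exists y; split; assumption. }
    assert (H12' : x1 < x2).
    { destruct Hne as [s0 [Hs0 Ps0]].
      pose proof (psi_cont c s0 ltac:(lra)) as Hcs.
      pose proof (proj1 (filterlim_locally (F:=locally s0) (psi c) (psi c s0)) Hcs) as Hcs2. clear Hcs. rename Hcs2 into Hcs.
      destruct (Hcs (mkposreal _ Ps0)) as [dl Hdl].
      set (s' := s0 + dl / 2).
      assert (Ps' : 0 < psi c s').
      { assert (Hb' : ball s0 dl s').
        { apply ball_R. unfold s'. rewrite Rabs_right; destruct dl; simpl; lra. }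
        specialize (Hdl s' Hb'). change (Rabs (psi c s' - psi c s0) < psi c s0) in Hdl. apply Rabs_lt_between in Hdl. lra. }
      assert (HS' : S s') by (split; [unfold s'; destruct dl; simpl; lra|exact Ps']).
      pose proof (Hx2a s' HS'). pose proof (Hx1a s0 (conj Hs0 Ps0)). unfold s' in *. destruct dl; simpl in *. lra. }
    destruct (Req_dec x1 b) as [Eb|Nb].
    +
      apply (Ucon 0 (exp (- q * ln x2))); [lra|left; apply exp_pos|].
      intros x Hx. unfold vfun. rewrite Rmult_0_l, Rplus_0_l. rewrite <- exp_plus.
      destruct (Rle_or_lt x x2) as [Hxx|Hxx].
      * destruct (Req_dec x x2) as [->|Hne2].
        { replace (- q * ln x2 + q * ln x2) with 0 by ring. rewrite exp_0. lra. }
        assert (0 < psi c x) by (apply Hin2; lra).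
        assert (exp (- q * ln x2 + q * ln x) <= 1).
        { apply Rle_trans with (exp 0); [apply exp_le_exp|rewrite exp_0; lra].
          pose proof (ln_le x x2 ltac:(lra) Hxx). nra. }
        nra.
      * pose proof (Habove x Hxx).
        assert (1 <= exp (- q * ln x2 + q * ln x)).
        { apply Rle_trans with (exp 0); [rewrite exp_0; lra|apply exp_le_exp].
          assert (0 < x2) by lra.
          pose proof (ln_increasing x2 x ltac:(lra) Hxx). nra. }
        nra.
    +
      assert (Hx1p : 0 < x1) by lra.
      destruct (three_term p q (ln x1) (ln x2) Hp Hq (ln_increasing x1 x2 Hx1p H12')) as (al & be & Hal & Hbe & Hv).
      apply (Ucon al be); try lra.
      intros x Hx. destruct (Hv (ln x)) as [Hv1 Hv2].
      destruct (Rle_or_lt x x1) as [Ha|Ha].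
      * assert (0 <= vfun al be p q (ln x)) by (apply Hv2; left; apply ln_le; lra).
        destruct (Req_dec x x1) as [->|Hne1].
        { assert (vfun al be p q (ln x1) <= 0) by (apply Hv1; split; [lra|left; apply ln_increasing; lra]).
          assert (Hz0 : vfun al be p q (ln x1) = 0) by lra. rewrite Hz0. lra. }
        pose proof (Hbelow x Hx ltac:(lra)). nra.
      * destruct (Rle_or_lt x x2) as [Hb2|Hb2].
        -- assert (vfun al be p q (ln x) <= 0) by (apply Hv1; split; [left; apply ln_increasing; lra|apply ln_le; lra]).
           destruct (Req_dec x x2) as [->|Hne2].
           { assert (0 <= vfun al be p q (ln x2)) by (apply Hv2; right; lra).
             assert (Hz0 : vfun al be p q (ln x2) = 0) by lra. rewrite Hz0. lra. }
           pose proof (Hin2 x Ha ltac:(lra)). nra.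
        -- assert (0 <= vfun al be p q (ln x)) by (apply Hv2; right; left; apply ln_increasing; lra).
           pose proof (Habove x Hb2). nra.
  - assert (Hin2 : forall x, x1 < x -> 0 < psi c x).
    { intros x Hx. apply Hinside; [exact Hx|]. apply NNPP. intros Hn. apply Hubd. exists x.
      intros y Hy. apply Rnot_lt_le. intros h. apply Hn. exists y; split; assumption. }
    destruct (Req_dec x1 b) as [Eb|Nb].
    + pose proof (is_RInt_gen_opp _ _ I2) as I2'.
      apply gen_nonpos in I2'.
      * change (- (FF mu2 - c * GG mu2) <= 0) in I2'. lra.
      * intros x Hx. pose proof (Hin2 x ltac:(lra)). pose proof (Rpower_pos' x mu2).
        change (- (Rpower x mu2 * psi c x) <= 0). nra.
    + assert (Hx1p : 0 < x1) by lra.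
      apply (Ucon (exp (p * ln x1)) 0); [left; apply exp_pos|lra|].
      intros x Hx. unfold vfun. rewrite Rmult_0_l, Rplus_0_r. rewrite <- exp_plus.
      destruct (Rle_or_lt x x1) as [Hxx|Hxx].
      * destruct (Req_dec x x1) as [->|Hne1].
        { replace (p * ln x1 + - p * ln x1) with 0 by ring. rewrite exp_0. lra. }
        pose proof (Hbelow x Hx ltac:(lra)).
        assert (1 <= exp (p * ln x1 + - p * ln x)).
        { apply Rle_trans with (exp 0); [rewrite exp_0; lra|apply exp_le_exp].
          pose proof (ln_le x x1 ltac:(lra) Hxx). nra. }
        nra.
      * pose proof (Hin2 x Hxx).
        assert (exp (p * ln x1 + - p * ln x) <= 1).
        { apply Rle_trans with (exp 0); [apply exp_le_exp|rewrite exp_0; lra].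
          pose proof (ln_increasing x1 x Hx1p Hxx). nra. }
        nra.
Qed.

End Mu.

Lemma NQ_convex nu a b m m' t : 0 <= b -> -1 < nu -> 0 < a -> 0 < m -> 0 < m' -> 0 <= t <= 1 ->
  NuttallQ (t * m + (1 - t) * m') nu a b <= t * NuttallQ m nu a b + (1 - t) * NuttallQ m' nu a b.
Proof.
  intros Hb Hnu Ha Hm Hm' Ht.
  assert (Hmt : 0 < t * m + (1 - t) * m') by nra.
  destruct (NQ_is _ nu a b Hb Hmt Hnu Ha) as [I0 _].
  destruct (NQ_is _ nu a b Hb Hm Hnu Ha) as [I1 _].
  destruct (NQ_is _ nu a b Hb Hm' Hnu Ha) as [I2 _].
  pose proof (gen_lin3 _ _ _ b _ _ _ t (1 - t) I1 I0 I2) as I.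
  pose proof (is_RInt_gen_opp _ _ I) as I'.
  apply gen_nonpos in I'.
  - change (- (t * NuttallQ m nu a b - NuttallQ (t * m + (1 - t) * m') nu a b + (1 - t) * NuttallQ m' nu a b) <= 0) in I'.
    lra.
  - intros x Hx. unfold opp; simpl. unfold nq.
    set (K := exp (- (x ^ 2 + a ^ 2) / 2) * BesselI nu (a * x)).
    assert (HK : 0 < K) by (unfold K; apply Rmult_lt_0_compat; [apply exp_pos|apply BesselI_pos; nra]).
    assert (Rpower x (t * m + (1 - t) * m') <= t * Rpower x m + (1 - t) * Rpower x m').
    { unfold Rpower. replace ((t * m + (1 - t) * m') * ln x) with (t * (m * ln x) + (1 - t) * (m' * ln x)) by ring.
      apply exp_convex; lra. }
    replace (- (t * (Rpower x m * exp (- (x ^ 2 + a ^ 2) / 2) * BesselI nu (a * x)) -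
      Rpower x (t * m + (1 - t) * m') * exp (- (x ^ 2 + a ^ 2) / 2) * BesselI nu (a * x) +
      (1 - t) * (Rpower x m' * exp (- (x ^ 2 + a ^ 2) / 2) * BesselI nu (a * x))))
      with (- ((t * Rpower x m + (1 - t) * Rpower x m' - Rpower x (t * m + (1 - t) * m')) * K)) by (unfold K; ring).
    nra.
Qed.

Lemma convex_bound (phi : R -> R) x0 h :
  (forall x y t, 0 < x -> 0 < y -> 0 <= t <= 1 -> phi (t * x + (1 - t) * y) <= t * phi x + (1 - t) * phi y) ->
  0 < x0 -> Rabs h <= x0 / 2 ->
  Rabs (phi (x0 + h) - phi x0) <=
    Rmax (Rabs (phi (x0 - x0 / 2) - phi x0)) (Rabs (phi (x0 + x0 / 2) - phi x0)) * (Rabs h / (x0 / 2)).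
Proof.
  intros Hc Hx0 Hh. set (d := x0 / 2). set (A := phi (x0 - d)). set (B := phi (x0 + d)).
  set (K := Rmax (Rabs (A - phi x0)) (Rabs (B - phi x0))).
  assert (Hd : 0 < d) by (unfold d; lra). assert (Hdd : d = x0 / 2) by reflexivity.
  pose proof (Rmax_l (Rabs (A - phi x0)) (Rabs (B - phi x0))) as K1.
  pose proof (Rmax_r (Rabs (A - phi x0)) (Rabs (B - phi x0))) as K2. fold K in K1, K2.
  apply Rabs_le_between in K1. apply Rabs_le_between in K2.
  assert (HK0 : 0 <= K) by (unfold K; eapply Rle_trans; [apply Rabs_pos|apply Rmax_l]).
  destruct (Rle_or_lt 0 h) as [Hp|Hn].
  - rewrite (Rabs_right h) in Hh |- * by lra.
    set (t := h / d). assert (Ht : 0 <= t <= 1).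
    { unfold t. split. apply Rdiv_le_0_compat; lra. apply Rmult_le_reg_r with d; [lra|]. unfold Rdiv; rewrite Rmult_assoc, Rinv_l; lra. }
    assert (U : phi (x0 + h) <= t * B + (1 - t) * phi x0).
    { replace (x0 + h) with (t * (x0 + d) + (1 - t) * x0) by (unfold t; field; lra).
      apply Hc; lra. }
    assert (L : phi x0 <= (1 / (1 + t)) * phi (x0 + h) + (1 - 1 / (1 + t)) * A).
    { replace x0 with ((1 / (1 + t)) * (x0 + h) + (1 - 1 / (1 + t)) * (x0 - d)) at 1.
      apply Hc; try lra. split. apply Rdiv_le_0_compat; lra.
      apply Rmult_le_reg_r with (1 + t); [lra|]. unfold Rdiv; rewrite Rmult_1_l, Rinv_l; lra.
      unfold t. field. split; lra. }
    assert (L' : - t * (A - phi x0) <= phi (x0 + h) - phi x0).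
    { apply Rmult_le_compat_l with (r := 1 + t) in L; [|lra].
      replace ((1 + t) * (1 / (1 + t) * phi (x0 + h) + (1 - 1 / (1 + t)) * A)) with (phi (x0 + h) + t * A) in L by (field; lra).
      lra. }
    replace (h / d) with t by reflexivity.
    apply Rabs_le. split; nra.
  - rewrite (Rabs_left h) in Hh |- * by lra.
    set (t := - h / d). assert (Ht : 0 <= t <= 1).
    { unfold t. split. apply Rdiv_le_0_compat; lra. apply Rmult_le_reg_r with d; [lra|]. unfold Rdiv; rewrite Rmult_assoc, Rinv_l; lra. }
    assert (U : phi (x0 + h) <= t * A + (1 - t) * phi x0).
    { replace (x0 + h) with (t * (x0 - d) + (1 - t) * x0) by (unfold t; field; lra).
      apply Hc; lra. }
    assert (L : phi x0 <= (1 / (1 + t)) * phi (x0 + h) + (1 - 1 / (1 + t)) * B).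
    { replace x0 with ((1 / (1 + t)) * (x0 + h) + (1 - 1 / (1 + t)) * (x0 + d)) at 1.
      apply Hc; try lra. split. apply Rdiv_le_0_compat; lra.
      apply Rmult_le_reg_r with (1 + t); [lra|]. unfold Rdiv; rewrite Rmult_1_l, Rinv_l; lra.
      unfold t. field. split; lra. }
    assert (L' : - t * (B - phi x0) <= phi (x0 + h) - phi x0).
    { apply Rmult_le_compat_l with (r := 1 + t) in L; [|lra].
      replace ((1 + t) * (1 / (1 + t) * phi (x0 + h) + (1 - 1 / (1 + t)) * B)) with (phi (x0 + h) + t * B) in L by (field; lra).
      lra. }
    replace (- h / d) with t by reflexivity.
    apply Rabs_le. split; nra.
Qed.

Lemma convex_cont (phi : R -> R) x0 :
  (forall x y t, 0 < x -> 0 < y -> 0 <= t <= 1 -> phi (t * x + (1 - t) * y) <= t * phi x + (1 - t) * phi y) ->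
  0 < x0 -> continuous phi x0.
Proof.
  intros Hc Hx0. apply (filterlim_locally (F:=locally x0) phi (phi x0)). intros eps.
  set (K := Rmax (Rabs (phi (x0 - x0 / 2) - phi x0)) (Rabs (phi (x0 + x0 / 2) - phi x0))).
  assert (HK0 : 0 <= K) by (unfold K; eapply Rle_trans; [apply Rabs_pos|apply Rmax_l]).
  assert (He : 0 < eps) by (destruct eps; simpl; lra).
  set (dl := Rmin (x0 / 2) (eps * (x0 / 2) / (K + 1))).
  assert (Hdl : 0 < dl).
  { unfold dl. apply Rmin_glb_lt. lra. apply Rdiv_lt_0_compat; nra. }
  exists (mkposreal dl Hdl). intros y Hy. change (Rabs (y - x0) < dl) in Hy.
  change (Rabs (phi y - phi x0) < eps).
  pose proof (Rmin_l (x0 / 2) (eps * (x0 / 2) / (K + 1))). pose proof (Rmin_r (x0 / 2) (eps * (x0 / 2) / (K + 1))).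
  fold dl in H, H0.
  pose proof (convex_bound phi x0 (y - x0) Hc Hx0 ltac:(lra)) as B. fold K in B.
  assert (Ey : x0 + (y - x0) = y) by (unfold Rminus; rewrite Rplus_comm, Rplus_assoc, Rplus_opp_l, Rplus_0_r; reflexivity). rewrite Ey in B.
  eapply Rle_lt_trans; [exact B|].
  assert (Rabs (y - x0) / (x0 / 2) < eps / (K + 1)).
  { apply Rmult_lt_reg_r with (x0 / 2); [lra|]. unfold Rdiv. rewrite Rmult_assoc, Rinv_l by lra.
    rewrite Rmult_1_r. unfold Rdiv in H0. lra. }
  assert (K * (Rabs (y - x0) / (x0 / 2)) <= K * (eps / (K + 1))).
  { apply Rmult_le_compat_l; lra. }
  assert (K * (eps / (K + 1)) < eps).
  { assert (E : K * (eps / (K + 1)) = eps - eps / (K + 1)) by (field; lra). rewrite E. assert (0 < eps / (K + 1)) by (apply Rdiv_lt_0_compat; lra). lra. }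
  lra.
Qed.

Lemma qc_unimodal (f : R -> R) :
  (forall x y z, 0 < x -> x < y -> y < z -> ~ (f y < f x /\ f y < f z)) ->
  (forall x, 0 < x -> continuous f x) ->
  unimodal_on f (fun mu => 0 < mu).
Proof.
  intros Hq Hc.
  set (D := fun y => 0 < y /\ exists x, 0 < x /\ x < y /\ f y < f x).
  assert (F1 : forall y z, D y -> y <= z -> f z <= f y).
  { intros y z [Hy [x [Hx [Hxy Hf]]]] Hyz. destruct (Req_dec y z) as [<-|Hne]; [lra|].
    apply Rnot_lt_le. intros h. apply (Hq x y z Hx Hxy ltac:(lra)). split; lra. }
  assert (Fup : forall y z, D y -> y <= z -> D z).
  { intros y z Dy Hyz. pose proof (F1 y z Dy Hyz). destruct Dy as [Hy [x [Hx [Hxy Hf]]]].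
    split; [lra|]. exists x. repeat split; lra. }
  assert (F2 : forall x y, 0 < x -> x <= y -> ~ D y -> f x <= f y).
  { intros x y Hx Hxy Hn. destruct (Req_dec x y) as [<-|Hne]; [lra|].
    apply Rnot_lt_le. intros h. apply Hn. split; [lra|]. exists x. repeat split; lra. }
  destruct (classic (exists y, D y)) as [Hne|Hemp].
  2: { exists 0. right. split.
       - intros x y Hx Hy _ Hy0. lra.
       - intros x y Hx Hy _ Hxy. apply F2; try lra. intros Dy. apply Hemp. exists y. exact Dy. }
  destruct (inf_ex D Hne) as [c [Hc1 Hc2]].
  { exists 0. intros y [Hy _]. lra. }
  assert (Hc0 : 0 <= c) by (apply Hc2; intros y [Hy _]; lra).
  assert (Hlt : forall y, 0 < y -> y < c -> ~ D y).
  { intros y Hy Hyc Dy. pose proof (Hc1 y Dy). lra. }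
  assert (Hgt : forall y, c < y -> D y).
  { intros y Hy. apply NNPP. intros Hn. assert (y <= c); [|lra]. apply Hc2. intros z Dz.
    apply Rnot_lt_le. intros h. apply Hn. apply (Fup z y Dz). lra. }
  exists c. left. split.
  - intros x y Hx Hy Hxy Hyc. apply F2; try lra.
    destruct (Req_dec y c) as [->|Hne']; [|apply Hlt; lra].
    intros [Hc0' [x0 [Hx0 [Hx0c Hf]]]].
    pose proof (Hc c Hc0') as Hcc.
    pose proof (proj1 (filterlim_locally (F:=locally c) f (f c)) Hcc) as Hcc2.
    assert (Heps : 0 < f x0 - f c) by lra.
    destruct (Hcc2 (mkposreal _ Heps)) as [dl Hdl].
    set (z := c - Rmin dl (c - x0) / 2).
    assert (Hm : 0 < Rmin dl (c - x0)) by (apply Rmin_glb_lt; [destruct dl; simpl; lra|lra]).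
    pose proof (Rmin_l dl (c - x0)). pose proof (Rmin_r dl (c - x0)).
    assert (Hz1 : x0 < z) by (unfold z; lra). assert (Hz2 : z < c) by (unfold z; lra).
    assert (Hb : ball c dl z).
    { apply ball_R. unfold z. rewrite Rabs_left by lra. lra. }
    specialize (Hdl z Hb). change (Rabs (f z - f c) < f x0 - f c) in Hdl.
    apply Rabs_lt_between in Hdl.
    assert (f x0 <= f z) by (apply F2; try lra; apply Hlt; lra).
    lra.
  - intros x y Hx Hy Hcx Hxy.
    destruct (Req_dec x c) as [->|Hne'].
    + destruct (Req_dec y c) as [->|Hne2]; [lra|].
      apply Rnot_lt_le. intros hlt.
      pose proof (Hc c Hx) as Hcc.
      pose proof (proj1 (filterlim_locally (F:=locally c) f (f c)) Hcc) as Hcc2.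
      assert (Heps : 0 < f y - f c) by lra.
      destruct (Hcc2 (mkposreal _ Heps)) as [dl Hdl].
      set (z := c + Rmin dl (y - c) / 2).
      assert (Hm : 0 < Rmin dl (y - c)) by (apply Rmin_glb_lt; [destruct dl; simpl; lra|lra]).
      pose proof (Rmin_l dl (y - c)). pose proof (Rmin_r dl (y - c)).
      assert (Hz1 : c < z) by (unfold z; lra). assert (Hz2 : z < y) by (unfold z; lra).
      assert (Hb : ball c dl z).
      { apply ball_R. unfold z. rewrite Rabs_right by lra. lra. }
      specialize (Hdl z Hb). change (Rabs (f z - f c) < f y - f c) in Hdl.
      apply Rabs_lt_between in Hdl.
      assert (f y <= f z) by (apply F1; [apply Hgt; lra|lra]).
      lra.
    + apply F1; [apply Hgt; lra|lra].
Qed.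

Theorem theorem6 (b nu1 nu2 a1 a2 : R) (l : nat) :
  0 <= b -> -1 < nu1 -> -1 < nu2 -> (0 < l)%nat -> nu1 - nu2 = 2 * INR l ->
  0 < a1 -> a1 <= a2 ->
  unimodal_on (fun mu => NuttallQ mu nu1 a1 b / NuttallQ mu nu2 a2 b) (fun mu => 0 < mu).
Proof.
  intros Hb Hnu1 Hnu2 Hl Hnn Ha1 Ha12.
  apply qc_unimodal.
  - intros x y z Hx Hxy Hyz.
    exact (noval b nu1 nu2 a1 a2 l Hb Hnu1 Hnu2 Hl Hnn Ha1 Ha12 x y z Hx Hxy Hyz).
  - intros x Hx. apply continuity_pt_filterlim.
    apply continuity_pt_div.
    + apply continuity_pt_filterlim. apply (convex_cont (fun mu => NuttallQ mu nu1 a1 b)); [|exact Hx].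
      intros u v t Hu Hv Ht. apply NQ_convex; assumption.
    + apply continuity_pt_filterlim. apply (convex_cont (fun mu => NuttallQ mu nu2 a2 b)); [|exact Hx].
      intros u v t Hu Hv Ht. apply NQ_convex; try assumption; lra.
    + pose proof (proj2 (NQ_is x nu2 a2 b Hb Hx Hnu2 ltac:(lra))). lra.
Qed.
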